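(* For $t\in(0,1)$ and $n\ge0$, $y_n'(t)=t\,r_n'(t)$.
   Context: Fix $\alpha>0$, $\beta>0$, and real $A,B$ with $A\ge0$, $A+B\ge0$, not both zero; $\theta$ is the Heaviside step function. For $t\in(0,1)$ let $w(x;t)=x^\alpha(1-x)^\beta(A+B\theta(x-t))$ on $[0,1]$, and let $P_n(x)=P_n(x;t)=x^n+\mathsf p_1(n,t)x^{n-1}+\cdots$ be the monic orthogonal polynomials: $\int_0^1P_iP_jw\,dx=h_i(t)\delta_{ij}$, $h_i>0$. Define $r_n(t)=B\,t^\alpha(1-t)^\beta P_n(t;t)P_{n-1}(t;t)/h_{n-1}$ ($r_0=0$) and $y_n(t)=\frac{\beta}{h_{n-1}}\int_0^1\frac{P_n(y)P_{n-1}(y)}{1-y}\,y^\alpha(1-y)^\beta(A+B\theta(y-t))\,dy$ ($y_0=0$). A prime denotes $d/dt$. *)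

(* Defs.v *)
From Stdlib Require Import Reals Lra Lia.
Open Scope R_scope.

(* x^a for real a > 0, extended continuously by 0 at x <= 0
   (Stdlib's Rpower 0 a = 1, which would be wrong). *)
Definition pw (x a : R) : R := if Rle_dec x 0 then 0 else Rpower x a.

(* Heaviside step function, convention theta(0) = 1 (irrelevant for integrals). *)
Definition theta (x : R) : R := if Rlt_dec x 0 then 0 else 1.

Definition wt (alpha beta A B t x : R) : R :=
  pw x alpha * pw (1 - x) beta * (A + B * theta (x - t)).

Fixpoint sumR (f : nat -> R) (n : nat) : R :=
  match n with O => 0 | S m => sumR f m + f m end.

Definition monic_poly (n : nat) (p : R -> R) : Prop :=
  exists c : nat -> R, forall x, p x = x ^ n + sumR (fun k => c k * x ^ k) n.

Definition RInt_val (f : R -> R) (a b v : R) : Prop :=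
  exists pr : Riemann_integrable f a b, RiemannInt pr = v.

Definition improper_int01 (f : R -> R) (I : R) : Prop :=
  (forall c, 0 < c < 1 -> exists v, RInt_val f 0 c v) /\
  (forall eps, eps > 0 -> exists d, d > 0 /\
     forall c v, 1 - d < c < 1 -> RInt_val f 0 c v -> Rabs (v - I) < eps).

(* r_n(t) = B t^alpha (1-t)^beta P_n(t;t) P_{n-1}(t;t) / h_{n-1}(t), r_0 = 0.
   P n t is the polynomial P_n(.;t), h n t = h_n(t). *)
Definition r_fun (alpha beta B : R) (P : nat -> R -> R -> R) (h : nat -> R -> R)
  (n : nat) (t : R) : R :=
  match n with
  | O => 0
  | S m => B * pw t alpha * pw (1 - t) beta * P n t t * P m t t / h m t
  end.

(* Main.v *)
Require Import Defs.
From Stdlib Require Import Reals Lra Lia ClassicalEpsilon.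
Open Scope R_scope.

Lemma cont_eps (f : R -> R) x :
  (forall e, e > 0 -> exists d, d > 0 /\ forall y, Rabs (y - x) < d -> Rabs (f y - f x) < e) ->
  continuity_pt f x.
Proof.
  intros H e He. destruct (H e He) as [d [Hd Hy]]. exists d. split; [lra|].
  intros y [_ Hy2]. apply Hy. exact Hy2.
Qed.

Lemma cont_eps_inv (f : R -> R) x : continuity_pt f x ->
  forall e, e > 0 -> exists d, d > 0 /\ forall y, Rabs (y - x) < d -> Rabs (f y - f x) < e.
Proof.
  intros H e He. destruct (H e He) as [d [Hd Hy]]. exists d. split; [lra|].
  intros y Hy'. destruct (Req_dec y x) as [->|Hne].
  - unfold Rminus. rewrite Rplus_opp_r, Rabs_R0. lra.
  - apply Hy. split. split; [exact I| auto]. exact Hy'.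
Qed.

Lemma derivable_pt_lim_loc (f g : R -> R) x l :
  (exists d, d > 0 /\ forall y, Rabs (y - x) < d -> f y = g y) ->
  derivable_pt_lim g x l -> derivable_pt_lim f x l.
Proof.
  intros [d [Hd Hfg]] Hg e He. destruct (Hg e He) as [d' Hd'].
  assert (Hm : 0 < Rmin d d') by (apply Rmin_pos; [lra| apply (cond_pos d')]).
  exists (mkposreal _ Hm). intros hh Hh0 Hh. simpl in Hh.
  rewrite (Hfg (x + hh)), (Hfg x).
  - apply Hd'; auto. apply Rlt_le_trans with (1 := Hh), Rmin_r.
  - unfold Rminus; rewrite Rplus_opp_r, Rabs_R0; lra.
  - replace (x + hh - x) with hh by ring. apply Rlt_le_trans with (1 := Hh), Rmin_l.
Qed.

Lemma pw_gt x a : 0 < x -> pw x a = Rpower x a.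
Proof. intros H. unfold pw. destruct (Rle_dec x 0); [lra|auto]. Qed.
Lemma pw_le0 x a : x <= 0 -> pw x a = 0.
Proof. intros H. unfold pw. destruct (Rle_dec x 0); [auto|lra]. Qed.
Lemma pw_nonneg x a : 0 <= pw x a.
Proof. unfold pw. destruct (Rle_dec x 0); [lra|]. unfold Rpower. left; apply exp_pos. Qed.
Lemma pw_pos x a : 0 < x -> 0 < pw x a.
Proof. intros H. rewrite pw_gt by auto. unfold Rpower. apply exp_pos. Qed.
Lemma Rpower_one_l a : Rpower 1 a = 1.
Proof. unfold Rpower. rewrite ln_1, Rmult_0_r. apply exp_0. Qed.
Lemma pw_le1 x a : x <= 1 -> 0 <= a -> pw x a <= 1.
Proof.
  intros H Ha. unfold pw. destruct (Rle_dec x 0); [lra|].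
  rewrite <- (Rpower_one_l a). apply Rle_Rpower_l; lra.
Qed.
Lemma pw_plus1 x a : 0 <= x -> pw x (a + 1) = x * pw x a.
Proof.
  intros H. destruct (Req_dec x 0) as [->|Hn].
  - rewrite !pw_le0 by lra. ring.
  - rewrite !pw_gt by lra. rewrite Rpower_plus, Rpower_1 by lra. ring.
Qed.

Lemma pw_small a : a > 0 -> forall e, e > 0 -> exists d, d > 0 /\ forall x, x < d -> pw x a < e.
Proof.
  intros Ha e He. exists (Rpower e (/ a)). split.
  - unfold Rpower; apply exp_pos.
  - intros x Hx. unfold pw. destruct (Rle_dec x 0); [lra|].
    assert (E : Rpower (Rpower e (/ a)) a = e).
    { rewrite Rpower_mult. rewrite Rinv_l by lra. unfold Rpower. rewrite Rmult_1_l. apply exp_ln; lra. }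
    rewrite <- E. apply Rlt_Rpower_l; lra.
Qed.

Lemma pw_cont0 a : a > 0 -> continuity_pt (fun x => pw x a) 0.
Proof.
  intros Ha. apply cont_eps. intros e He. destruct (pw_small a Ha e He) as [d [Hd Hx]].
  exists d. split; auto. intros y Hy. rewrite (pw_le0 0) by lra. rewrite Rminus_0_r in *.
  rewrite Rabs_pos_eq by apply pw_nonneg. apply Hx. apply Rle_lt_trans with (2 := Hy), RRle_abs.
Qed.

Lemma pw_deriv_pos x a : 0 < x -> derivable_pt_lim (fun u => pw u a) x (a * pw x (a - 1)).
Proof.
  intros Hx. rewrite pw_gt by auto.
  apply derivable_pt_lim_loc with (g := fun u => Rpower u a).
  - exists x. split; auto. intros y Hy. apply pw_gt.
    apply Rabs_def2 in Hy. lra.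
  - apply derivable_pt_lim_power; auto.
Qed.

Lemma pw_deriv_neg x a : x < 0 -> derivable_pt_lim (fun u => pw u a) x (a * pw x (a - 1)).
Proof.
  intros Hx. rewrite (pw_le0 x) by lra. rewrite Rmult_0_r.
  apply derivable_pt_lim_loc with (g := fun _ => 0).
  - exists (- x). split; [lra|]. intros y Hy. apply pw_le0. apply Rabs_def2 in Hy. lra.
  - apply derivable_pt_lim_const.
Qed.

Lemma pw_deriv0 a : a > 1 -> derivable_pt_lim (fun u => pw u a) 0 (a * pw 0 (a - 1)).
Proof.
  intros Ha. rewrite (pw_le0 0) by lra. rewrite Rmult_0_r.
  intros e He. destruct (pw_small (a - 1) ltac:(lra) e He) as [d [Hd Hx]].
  exists (mkposreal d Hd). intros hh Hh0 Hh. simpl in Hh.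
  rewrite Rplus_0_l, (pw_le0 0) by lra. rewrite Rminus_0_r, Rminus_0_r.
  destruct (Rle_dec hh 0).
  - rewrite pw_le0 by auto. unfold Rdiv. rewrite Rmult_0_l, Rabs_R0. auto.
  - replace a with ((a - 1) + 1) by ring. rewrite pw_plus1 by lra.
    replace (hh * pw hh (a - 1) / hh) with (pw hh (a - 1)) by (field; auto).
    rewrite Rabs_pos_eq by apply pw_nonneg. apply Hx.
    apply Rle_lt_trans with (2 := Hh), RRle_abs.
Qed.

Lemma pw_deriv a x : a > 1 -> derivable_pt_lim (fun u => pw u a) x (a * pw x (a - 1)).
Proof.
  intros Ha. destruct (Rtotal_order x 0) as [H|[H|H]].
  - apply pw_deriv_neg; auto.
  - subst. apply pw_deriv0; auto.
  - apply pw_deriv_pos; auto.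
Qed.

Lemma pw_cont_pos x a : 0 < x -> continuity_pt (fun u => pw u a) x.
Proof.
  intros Hx. apply derivable_continuous_pt. exists (a * pw x (a-1)). apply pw_deriv_pos; auto.
Qed.

Lemma pw_cont x a : a > 0 -> 0 <= x -> continuity_pt (fun u => pw u a) x.
Proof.
  intros Ha Hx. destruct (Req_dec x 0) as [->|Hn].
  - apply pw_cont0; auto.
  - apply pw_cont_pos; lra.
Qed.

Lemma sumR_ext_lt (f g : nat -> R) N : (forall k, (k < N)%nat -> f k = g k) -> sumR f N = sumR g N.
Proof. induction N; simpl; intros H; auto. rewrite IHN by (intros; apply H; lia). rewrite H by lia. auto. Qed.
Lemma sumR_ext (f g : nat -> R) N : (forall k, f k = g k) -> sumR f N = sumR g N.
Proof. intros H; apply sumR_ext_lt; auto. Qed.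
Lemma sumR_plus (f g : nat -> R) N : sumR (fun k => f k + g k) N = sumR f N + sumR g N.
Proof. induction N; simpl; [ring|]. rewrite IHN; ring. Qed.
Lemma sumR_scal (f : nat -> R) a N : sumR (fun k => a * f k) N = a * sumR f N.
Proof. induction N; simpl; [ring|]. rewrite IHN; ring. Qed.
Lemma sumR_zero N : sumR (fun _ => 0) N = 0.
Proof. induction N; simpl; [ring|]. rewrite IHN; ring. Qed.
Lemma sumR_abs (f : nat -> R) N : Rabs (sumR f N) <= sumR (fun k => Rabs (f k)) N.
Proof. induction N; simpl. rewrite Rabs_R0; lra.
  eapply Rle_trans. apply Rabs_triang. lra. Qed.
Lemma sumR_le (f g : nat -> R) N : (forall k, (k < N)%nat -> f k <= g k) -> sumR f N <= sumR g N.
Proof. induction N; simpl; intros H; [lra|]. assert (f N <= g N) by (apply H; lia).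
  assert (sumR f N <= sumR g N) by (apply IHN; intros; apply H; lia). lra. Qed.
Lemma sumR_nonneg (f : nat -> R) N : (forall k, 0 <= f k) -> 0 <= sumR f N.
Proof. intros H. induction N; simpl; [lra|]. specialize (H N); lra. Qed.

Definition spoly (c : nat -> R) (N : nat) (x : R) : R := sumR (fun k => c k * x ^ k) N.
Definition deg_lt (N : nat) (f : R -> R) : Prop := exists c, forall x, f x = spoly c N x.

Lemma deg_lt_S N f : deg_lt N f -> deg_lt (S N) f.
Proof.
  intros [c Hc]. exists (fun k => if Nat.ltb k N then c k else 0). intros x. rewrite Hc.
  unfold spoly. simpl. rewrite Nat.ltb_irrefl. rewrite Rmult_0_l, Rplus_0_r.
  apply sumR_ext_lt. intros k Hk. apply Nat.ltb_lt in Hk. rewrite Hk. auto.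
Qed.
Lemma deg_lt_mono N M f : (N <= M)%nat -> deg_lt N f -> deg_lt M f.
Proof. induction 1; auto. intros H'. apply deg_lt_S; auto. Qed.
Lemma deg_lt_plus N f g : deg_lt N f -> deg_lt N g -> deg_lt N (fun x => f x + g x).
Proof. intros [c Hc] [d Hd]. exists (fun k => c k + d k). intros x. rewrite Hc, Hd.
  unfold spoly. rewrite <- sumR_plus. apply sumR_ext. intros; ring. Qed.
Lemma deg_lt_scal N a f : deg_lt N f -> deg_lt N (fun x => a * f x).
Proof. intros [c Hc]. exists (fun k => a * c k). intros x. rewrite Hc.
  unfold spoly. rewrite <- sumR_scal. apply sumR_ext. intros; ring. Qed.
Lemma deg_lt_zero N : deg_lt N (fun _ => 0).
Proof. exists (fun _ => 0). intros x. unfold spoly. symmetry. rewrite (sumR_ext _ (fun _ => 0)). apply sumR_zero. intros; ring. Qed.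
Lemma deg_lt_ext N f g : (forall x, f x = g x) -> deg_lt N f -> deg_lt N g.
Proof. intros H [c Hc]. exists c. intros x. rewrite <- H. auto. Qed.
Lemma deg_lt_minus N f g : deg_lt N f -> deg_lt N g -> deg_lt N (fun x => f x - g x).
Proof. intros Hf Hg. apply deg_lt_ext with (f := fun x => f x + (-1) * g x).
  intros; cbv beta; ring. apply deg_lt_plus; auto. apply deg_lt_scal; auto. Qed.
Lemma deg_lt_sumR N M (F : nat -> R -> R) :
  (forall k, (k < M)%nat -> deg_lt N (F k)) -> deg_lt N (fun x => sumR (fun k => F k x) M).
Proof. induction M; intros H; simpl. apply deg_lt_zero.
  apply deg_lt_plus. apply IHM; intros; apply H; lia. apply H; lia. Qed.
Lemma deg_lt_mon n : deg_lt (S n) (fun x => x ^ n).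
Proof. exists (fun k => if Nat.eqb k n then 1 else 0). intros x. unfold spoly. simpl.
  rewrite Nat.eqb_refl. rewrite (sumR_ext_lt _ (fun _ => 0)). rewrite sumR_zero; ring.
  intros k Hk. destruct (Nat.eqb_spec k n); [lia|ring]. Qed.
Lemma monic_deg n p : monic_poly n p -> deg_lt (S n) p.
Proof. intros [c Hc]. apply deg_lt_ext with (f := fun x => x ^ n + spoly c n x).
  intros; rewrite Hc; auto. apply deg_lt_plus. apply deg_lt_mon. apply deg_lt_S. exists c; auto. Qed.
Lemma monic_diff n p q : monic_poly n p -> monic_poly n q -> deg_lt n (fun x => p x - q x).
Proof. intros [c Hc] [d Hd]. exists (fun k => c k - d k). intros x. rewrite Hc, Hd.
  unfold spoly. replace (x ^ n + sumR (fun k => c k * x ^ k) n - (x ^ n + sumR (fun k => d k * x ^ k) n))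
   with (sumR (fun k => c k * x ^ k) n + (-1) * sumR (fun k => d k * x ^ k) n) by ring.
  rewrite <- sumR_scal, <- sumR_plus. apply sumR_ext; intros; ring. Qed.

Definition dspoly (c : nat -> R) (N : nat) (x : R) : R := sumR (fun k => c k * (INR k * x ^ pred k)) N.
Lemma spoly_deriv c N x : derivable_pt_lim (spoly c N) x (dspoly c N x).
Proof.
  induction N; unfold spoly, dspoly; simpl.
  - apply derivable_pt_lim_const.
  - apply derivable_pt_lim_plus with (f1 := fun x => sumR (fun k => c k * x ^ k) N)
      (f2 := fun x => c N * x ^ N); auto.
    apply derivable_pt_lim_scal with (f := fun x => x ^ N). apply derivable_pt_lim_pow.
Qed.
Lemma dspoly_reindex c N x : dspoly c (S N) x = spoly (fun k => INR (S k) * c (S k)) N x.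
Proof.
  induction N; unfold dspoly, spoly in *; simpl in *. ring.
  rewrite IHN. simpl. ring.
Qed.
Lemma spoly_cont c N x : continuity_pt (spoly c N) x.
Proof. apply derivable_continuous_pt. exists (dspoly c N x). apply spoly_deriv. Qed.
Lemma cont_ext (f g : R -> R) x : (forall y, f y = g y) -> continuity_pt f x -> continuity_pt g x.
Proof. intros H Hf. apply cont_eps. intros e He. destruct (cont_eps_inv f x Hf e He) as [d [Hd Hy]].
  exists d; split; auto. intros y Hy'. rewrite <- !H. auto. Qed.
Lemma deg_lt_cont N f x : deg_lt N f -> continuity_pt f x.
Proof. intros [c Hc]. apply cont_ext with (f := spoly c N). intros; rewrite Hc; auto. apply spoly_cont. Qed.

Lemma spoly_first c N x : spoly c (S N) x = c 0%nat + x * spoly (fun k => c (S k)) N x.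
Proof. induction N; unfold spoly in *; simpl in *. ring. rewrite IHN. simpl. ring. Qed.

Lemma poly_zero_interval a b : a < b -> forall N c,
  (forall x, a < x < b -> spoly c N x = 0) -> forall k, (k < N)%nat -> c k = 0.
Proof.
  intros Hab N. induction N; intros c H k Hk; [lia|].
  assert (Hd : forall x, a < x < b -> spoly (fun k => INR (S k) * c (S k)) N x = 0).
  { intros x Hx. rewrite <- dspoly_reindex.
    apply (uniqueness_limite (spoly c (S N)) x). apply spoly_deriv.
    apply derivable_pt_lim_loc with (g := fun _ => 0).
    - exists (Rmin (x - a) (b - x)). split. apply Rmin_pos; lra.
      intros y Hy. apply H. apply Rabs_def2 in Hy. destruct Hy as [H1 H2].
      pose proof (Rmin_l (x-a) (b-x)). pose proof (Rmin_r (x-a) (b-x)). lra.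
    - apply derivable_pt_lim_const. }
  assert (HS : forall j, (j < N)%nat -> c (S j) = 0).
  { intros j Hj. pose proof (IHN _ Hd j Hj) as E. apply Rmult_integral in E. destruct E as [E|E]; auto.
    exfalso. pose proof (pos_INR j). rewrite S_INR in E. lra. }
  destruct k as [|k].
  - specialize (H ((a + b) / 2) ltac:(lra)). rewrite spoly_first in H.
    unfold spoly in H. rewrite (sumR_ext_lt _ (fun _ => 0)) in H. rewrite sumR_zero in H. lra.
    intros j Hj. rewrite HS by auto. ring.
  - apply HS. lia.
Qed.

Lemma spoly_unique a b N c d : a < b -> (forall x, a < x < b -> spoly c N x = spoly d N x) ->
  forall k, (k < N)%nat -> c k = d k.
Proof.
  intros Hab H k Hk. assert (E := poly_zero_interval a b Hab N (fun k => c k - d k)).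
  assert (c k - d k = 0); [|lra]. apply E; auto. intros x Hx. unfold spoly.
  rewrite (sumR_ext _ (fun k => c k * x ^ k + (-1) * (d k * x ^ k))) by (intros; ring).
  rewrite sumR_plus, sumR_scal. fold (spoly c N x) (spoly d N x). rewrite H; auto. ring.
Qed.

Lemma pow_le1 x n : 0 <= x <= 1 -> x ^ n <= 1.
Proof. intros H. induction n; simpl. lra. rewrite <- (Rmult_1_r 1). apply Rmult_le_compat; try lra.
  apply pow_le; lra. Qed.
Lemma spoly_bound c N x : Rabs x <= 1 -> Rabs (spoly c N x) <= sumR (fun k => Rabs (c k)) N.
Proof.
  intros Hx. unfold spoly. eapply Rle_trans. apply sumR_abs. apply sumR_le. intros k _.
  rewrite Rabs_mult. rewrite <- (Rmult_1_r (Rabs (c k))) at 2. apply Rmult_le_compat_l. apply Rabs_pos.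
  rewrite <- RPow_abs. apply pow_le1. split; auto. apply Rabs_pos.
Qed.

Lemma RInt_val_unique f a b u v : RInt_val f a b u -> RInt_val f a b v -> u = v.
Proof. intros [p1 H1] [p2 H2]. subst. apply RiemannInt_P5. Qed.
Definition RInt_val_intg f a b v (H : RInt_val f a b v) : Riemann_integrable f a b :=
  proj1_sig (constructive_indefinite_description _ H).
Lemma RInt_val_of f a b (pr : Riemann_integrable f a b) : RInt_val f a b (RiemannInt pr).
Proof. exists pr; auto. Qed.
Lemma RInt_val_RI f a b v (H : RInt_val f a b v) (pr : Riemann_integrable f a b) : RiemannInt pr = v.
Proof. eapply RInt_val_unique. apply RInt_val_of. auto. Qed.

Definition IntR (f : R -> R) (a b : R) : R :=
  match excluded_middle_informative (exists v, RInt_val f a b v) with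
  | left H => proj1_sig (constructive_indefinite_description _ H) | right _ => 0 end.
Lemma IntR_val f a b : Riemann_integrable f a b -> RInt_val f a b (IntR f a b).
Proof. intros pr. unfold IntR. destruct (excluded_middle_informative _) as [p|n].
  - destruct (constructive_indefinite_description _ p) as [v Hv]. auto.
  - exfalso. apply n. exists (RiemannInt pr). apply RInt_val_of. Qed.
Lemma IntR_eq f a b v : RInt_val f a b v -> IntR f a b = v.
Proof. intros H. eapply RInt_val_unique. apply IntR_val. eapply RInt_val_intg; eauto. auto. Qed.

Lemma RInt_val_lin f g a b l u v : RInt_val f a b u -> RInt_val g a b v ->
  RInt_val (fun x => f x + l * g x) a b (u + l * v).
Proof. intros [p1 H1] [p2 H2]. exists (RiemannInt_P10 l p1 p2). subst. apply RiemannInt_P13. Qed.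
Lemma RInt_val_ext_closed f g a b v : (forall x, Rmin a b <= x <= Rmax a b -> f x = g x) ->
  RInt_val f a b v -> RInt_val g a b v.
Proof. intros H [p Hp]. assert (pg : Riemann_integrable g a b).
  { apply Riemann_integrable_ext with f; auto. }
  exists pg. rewrite <- Hp.
  assert (Hn : RInt_val (fun x => g x + (-1) * f x) a b (RiemannInt pg + (-1) * RiemannInt p)).
  { apply RInt_val_lin; apply RInt_val_of. }
  assert (Hz : RInt_val (fun x => g x + (-1) * f x) a b 0).
  { assert (pz : Riemann_integrable (fun x => g x + (-1) * f x) a b) by (apply RInt_val_intg in Hn; auto).
    exists pz. destruct (Rle_dec a b).
    - rewrite (RiemannInt_P18 pz (RiemannInt_P14 a b 0)); auto. rewrite RiemannInt_P15. ring.
      intros x Hx. unfold fct_cte. rewrite H. ring. rewrite Rmin_left, Rmax_right; lra.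
    - rewrite (RiemannInt_P8 pz (RiemannInt_P1 pz)).
      rewrite (RiemannInt_P18 (RiemannInt_P1 pz) (RiemannInt_P14 b a 0)); try lra. rewrite RiemannInt_P15. ring.
      intros x Hx. unfold fct_cte. rewrite H. ring. rewrite Rmin_right, Rmax_left; lra. }
  pose proof (RInt_val_unique _ _ _ _ _ Hn Hz). lra.
Qed.
Lemma RInt_val_ext f g a b v : (forall x, f x = g x) -> RInt_val f a b v -> RInt_val g a b v.
Proof. intros H; apply RInt_val_ext_closed; auto. Qed.
Lemma RInt_val_plus f g a b u v : RInt_val f a b u -> RInt_val g a b v ->
  RInt_val (fun x => f x + g x) a b (u + v).
Proof. intros H1 H2. apply RInt_val_ext with (fun x => f x + 1 * g x). intros; ring.
  replace (u + v) with (u + 1 * v) by ring. apply RInt_val_lin; auto. Qed.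
Lemma RInt_val_const a b k : RInt_val (fun _ => k) a b (k * (b - a)).
Proof. exists (RiemannInt_P14 a b k). apply RiemannInt_P15. Qed.
Lemma RInt_val_scal f a b l v : RInt_val f a b v -> RInt_val (fun x => l * f x) a b (l * v).
Proof. intros H. apply RInt_val_ext with (fun x => 0 + l * f x). intros; ring.
  replace (l * v) with (0 * (b - a) + l * v) by ring. apply RInt_val_lin; auto.
  apply RInt_val_const. Qed.
Lemma RInt_val_minus f g a b u v : RInt_val f a b u -> RInt_val g a b v ->
  RInt_val (fun x => f x - g x) a b (u - v).
Proof. intros H1 H2. apply RInt_val_ext with (fun x => f x + (-1) * g x). intros; ring.
  replace (u - v) with (u + (-1) * v) by ring. apply RInt_val_lin; auto. Qed.
Lemma RInt_val_zero a b : RInt_val (fun _ => 0) a b 0.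
Proof. assert (H := RInt_val_const a b 0). rewrite Rmult_0_l in H. exact H. Qed.
Lemma RInt_val_sumR (F : nat -> R -> R) (V : nat -> R) a b M :
  (forall k, (k < M)%nat -> RInt_val (F k) a b (V k)) ->
  RInt_val (fun x => sumR (fun k => F k x) M) a b (sumR V M).
Proof. induction M; intros H; simpl. apply RInt_val_zero.
  apply RInt_val_plus. apply IHM; intros; apply H; lia. apply H; lia. Qed.

Lemma RInt_val_chasles f a b c u v : RInt_val f a b u -> RInt_val f b c v -> RInt_val f a c (u + v).
Proof. intros [p1 H1] [p2 H2]. exists (RiemannInt_P24 p1 p2). subst. symmetry. apply RiemannInt_P26. Qed.
Lemma RInt_val_swap f a b v : RInt_val f a b v -> RInt_val f b a (- v).
Proof. intros [p H]. exists (RiemannInt_P1 p). subst. rewrite (RiemannInt_P8 p (RiemannInt_P1 p)). ring. Qed.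
Lemma intg_sub_l f a b c : Riemann_integrable f a b -> a <= c <= b -> exists v, RInt_val f a c v.
Proof. intros p H. exists (RiemannInt (RiemannInt_P22 p H)). apply RInt_val_of. Qed.
Lemma intg_sub_r f a b c : Riemann_integrable f a b -> a <= c <= b -> exists v, RInt_val f c b v.
Proof. intros p H. exists (RiemannInt (RiemannInt_P23 p H)). apply RInt_val_of. Qed.
Lemma intg_sub f a b c d : Riemann_integrable f a b -> a <= c -> c <= d -> d <= b -> exists v, RInt_val f c d v.
Proof. intros p H1 H2 H3. destruct (intg_sub_l f a b d p ltac:(lra)) as [v Hv].
  apply (intg_sub_r f a d c (RInt_val_intg _ _ _ _ Hv)). lra. Qed.

Lemma RInt_val_open f g a b v : a <= b -> (forall x, a < x < b -> f x = g x) ->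
  RInt_val f a b v -> (exists u, RInt_val g a b u) -> RInt_val g a b v.
Proof. intros Hab H [p Hp] [u [q Hq]]. exists q. subst. symmetry. apply RiemannInt_P18; auto. Qed.

Lemma RInt_val_le f g a b u v : a <= b -> (forall x, a < x < b -> f x <= g x) ->
  RInt_val f a b u -> RInt_val g a b v -> u <= v.
Proof. intros Hab H [p Hp] [q Hq]. subst. apply RiemannInt_P19; auto. Qed.

Lemma Rabs_bnd x M : Rabs x <= M -> - M <= x <= M.
Proof. intros H. unfold Rabs in H. destruct (Rcase_abs x); lra. Qed.
Lemma RInt_val_bound f a b v M : a <= b -> (forall x, a < x < b -> Rabs (f x) <= M) ->
  RInt_val f a b v -> Rabs v <= M * (b - a).
Proof. intros Hab H [p Hp]. subst. destruct (RiemannInt_const_bound (l:=-M) (u:=M) p Hab).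
  intros x Hx. specialize (H x Hx). apply Rabs_bnd in H. lra.
  apply Rabs_le. lra. Qed.

Lemma RInt_val_bound_or f a b v M : (forall x, Rmin a b < x < Rmax a b -> Rabs (f x) <= M) ->
  RInt_val f a b v -> Rabs v <= M * Rabs (b - a).
Proof. intros H Hv. destruct (Rle_dec a b).
  - rewrite (Rabs_pos_eq (b - a)) by lra. apply (RInt_val_bound f a b v M r); auto.
    intros x Hx; apply H. rewrite Rmin_left, Rmax_right; lra.
  - apply RInt_val_swap in Hv. rewrite <- (Rabs_Ropp (b - a)), Ropp_minus_distr, (Rabs_pos_eq (a - b)) by lra.
    rewrite <- (Rabs_Ropp v). apply (RInt_val_bound f b a (- v) M); auto. lra.
    intros x Hx; apply H. rewrite Rmin_right, Rmax_left; lra.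
Qed.

Lemma cont_intg f a b : (forall x, Rmin a b <= x <= Rmax a b -> continuity_pt f x) ->
  exists v, RInt_val f a b v.
Proof. intros H. destruct (Rle_dec a b).
  - assert (p := continuity_implies_RiemannInt (f:=f) r ltac:(intros x Hx; apply H; rewrite Rmin_left, Rmax_right; lra)).
    exists (RiemannInt p). apply RInt_val_of.
  - assert (p := continuity_implies_RiemannInt (f:=f) (a:=b) (b:=a) ltac:(lra) ltac:(intros x Hx; apply H; rewrite Rmin_right, Rmax_left; lra)).
    exists (RiemannInt (RiemannInt_P1 p)). apply RInt_val_of.
Qed.

Lemma FTC_val f F a b : a <= b -> (forall x, a <= x <= b -> continuity_pt f x) ->
  (forall x, a <= x <= b -> derivable_pt_lim F x (f x)) -> RInt_val f a b (F b - F a).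
Proof.
  intros Hab C0 HF.
  assert (A1 : antiderivative f F a b).
  { split; auto. intros x Hx. exists (exist _ (f x) (HF x Hx)). symmetry. apply derive_pt_eq_0. apply HF; auto. }
  assert (A2 := RiemannInt_P29 Hab C0).
  destruct (antiderivative_Ucte _ _ _ _ _ A1 A2) as [c Hc].
  assert (pr0 := continuity_implies_RiemannInt Hab C0).
  exists pr0. rewrite (RiemannInt_P20 Hab (FTC_P1 Hab C0) pr0).
  rewrite (Hc b), (Hc a) by lra. ring.
Qed.

Definition Gm (H : nat -> R) (i j : nat) : R := if Nat.eqb i j then H i else 0.

Lemma span (Q : nat -> R -> R) (Hmon : forall n, monic_poly n (Q n)) N q :
  deg_lt N q -> exists b, forall x, q x = sumR (fun j => b j * Q j x) N.
Proof.
  revert q. induction N; intros q [c Hc].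
  - exists (fun _ => 0). intros x. rewrite Hc. reflexivity.
  - destruct (Hmon N) as [d Hd].
    destruct (IHN (fun x => q x - c N * Q N x)) as [b Hb].
    + exists (fun k => c k - c N * d k). intros x. rewrite Hc, Hd. unfold spoly. simpl.
      rewrite (sumR_ext (fun k => (c k - c N * d k) * x ^ k) (fun k => c k * x ^ k + (- c N) * (d k * x ^ k))) by (intros; ring).
      rewrite sumR_plus, sumR_scal. ring.
    + exists (fun j => if Nat.eqb j N then c N else b j). intros x. simpl.
      rewrite Nat.eqb_refl. rewrite (sumR_ext_lt _ (fun j => b j * Q j x)).
      rewrite <- Hb. ring. intros k Hk. destruct (Nat.eqb_spec k N); [lia|auto].
Qed.

Lemma ip_span (Q : nat -> R -> R) w H
  (Hip : forall i j, RInt_val (fun x => Q i x * Q j x * w x) 0 1 (Gm H i j))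
  N b k : RInt_val (fun x => sumR (fun j => b j * Q j x) N * Q k x * w x) 0 1
     (sumR (fun j => b j * Gm H j k) N).
Proof.
  apply RInt_val_ext with (fun x => sumR (fun j => b j * (Q j x * Q k x * w x)) N).
  - intros x. induction N; simpl. ring. rewrite IHN. ring.
  - apply RInt_val_sumR. intros j _. apply RInt_val_scal. apply Hip.
Qed.

Lemma sumR_Gm_lt H b N k : (N <= k)%nat -> sumR (fun j => b j * Gm H j k) N = 0.
Proof. intros Hk. rewrite (sumR_ext_lt _ (fun _ => 0)). apply sumR_zero.
  intros j Hj. unfold Gm. destruct (Nat.eqb_spec j k); [lia|ring]. Qed.

Lemma sumR_Gm_in H b N k : (k < N)%nat -> sumR (fun j => b j * Gm H j k) N = b k * H k.
Proof. induction N; intros Hk; [lia|]. simpl. destruct (Nat.eq_dec k N).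
  - subst. rewrite sumR_Gm_lt by lia. unfold Gm. rewrite Nat.eqb_refl. ring.
  - rewrite IHN by lia. unfold Gm. destruct (Nat.eqb_spec N k); [lia|ring]. Qed.

Lemma ip_intg (Q : nat -> R -> R) w H (Hmon : forall n, monic_poly n (Q n))
  (Hip : forall i j, RInt_val (fun x => Q i x * Q j x * w x) 0 1 (Gm H i j))
  N q k : deg_lt N q -> exists v, RInt_val (fun x => q x * Q k x * w x) 0 1 v.
Proof.
  intros Hq. destruct (span Q Hmon N q Hq) as [b Hb]. eexists.
  apply RInt_val_ext with (2 := ip_span Q w H Hip N b k). intros x. rewrite Hb. auto.
Qed.

Lemma ip_orth (Q : nat -> R -> R) w H (Hmon : forall n, monic_poly n (Q n))
  (Hip : forall i j, RInt_val (fun x => Q i x * Q j x * w x) 0 1 (Gm H i j))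
  k q : deg_lt k q -> RInt_val (fun x => q x * Q k x * w x) 0 1 0.
Proof.
  intros Hq. destruct (span Q Hmon k q Hq) as [b Hb].
  assert (Hv := ip_span Q w H Hip k b k). rewrite (sumR_Gm_lt H b k k) in Hv by lia.
  apply RInt_val_ext with (2 := Hv). intros x. rewrite Hb. auto.
Qed.

Lemma expand (Q : nat -> R -> R) w H (Hmon : forall n, monic_poly n (Q n))
  (Hip : forall i j, RInt_val (fun x => Q i x * Q j x * w x) 0 1 (Gm H i j))
  (Hpos : forall j, H j <> 0) N q (c : nat -> R) :
  deg_lt N q -> (forall j, (j < N)%nat -> RInt_val (fun x => q x * Q j x * w x) 0 1 (c j)) ->
  forall x, q x = sumR (fun j => c j / H j * Q j x) N.
Proof.
  intros Hq Hc. destruct (span Q Hmon N q Hq) as [b Hb]. intros x. rewrite Hb.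
  apply sumR_ext_lt. intros j Hj. f_equal.
  assert (E : c j = b j * H j).
  { rewrite <- (sumR_Gm_in H b N j Hj). eapply RInt_val_unique. apply Hc; auto.
    apply RInt_val_ext with (2 := ip_span Q w H Hip N b j). intros y; rewrite Hb; auto. }
  rewrite E. field. auto.
Qed.

Definition rho (al be u : R) : R := pw u al * pw (1 - u) be.

Lemma theta_neg x : x < 0 -> theta x = 0.
Proof. unfold theta. destruct (Rlt_dec x 0); lra. Qed.
Lemma theta_pos x : 0 <= x -> theta x = 1.
Proof. unfold theta. destruct (Rlt_dec x 0); lra. Qed.

Lemma wt_rho al be A B t x : wt al be A B t x = rho al be x * (A + B * theta (x - t)).
Proof. reflexivity. Qed.

Lemma lim_cont f x l : derivable_pt_lim f x l -> continuity_pt f x.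
Proof. intros H. apply derivable_continuous_pt. exists l. auto. Qed.
Lemma pw1m_cont be u : be > 0 -> u <= 1 -> continuity_pt (fun u => pw (1 - u) be) u.
Proof. intros Hb Hu. apply (continuity_pt_comp (fun u => 1 - u) (fun v => pw v be)).
  apply (lim_cont _ _ (0 - 1)). apply (derivable_pt_lim_minus (fun _ => 1) (fun u => u) u 0 1 ltac:(apply derivable_pt_lim_const) ltac:(apply derivable_pt_lim_id)).
  apply pw_cont; lra. Qed.

Lemma rho_cont al be u : al > 0 -> be > 0 -> 0 <= u <= 1 -> continuity_pt (rho al be) u.
Proof. intros Ha Hb Hu. unfold rho. apply continuity_pt_mult with (f1 := fun u => pw u al) (f2 := fun u => pw (1 - u) be).
  apply pw_cont; lra. apply pw1m_cont; lra. Qed.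

Lemma rho_bound al be u : al >= 0 -> be >= 0 -> 0 <= u <= 1 -> 0 <= rho al be u <= 1.
Proof. intros Ha Hb Hu. unfold rho. pose proof (pw_nonneg u al). pose proof (pw_nonneg (1-u) be).
  pose proof (pw_le1 u al ltac:(lra) ltac:(lra)). pose proof (pw_le1 (1-u) be ltac:(lra) ltac:(lra)).
  split. apply Rmult_le_pos; auto. apply Rle_trans with (1 * 1); [apply Rmult_le_compat; lra | lra]. Qed.

Lemma rho_pos al be u : 0 < u < 1 -> 0 < rho al be u.
Proof. intros Hu. unfold rho. apply Rmult_lt_0_compat; apply pw_pos; lra. Qed.

Lemma wdiff_lt al be A B f s t vs vt : al > 0 -> be > 0 -> 0 < s -> s < t -> t < 1 ->
  (forall x, continuity_pt f x) ->
  RInt_val (fun x => f x * wt al be A B s x) 0 1 vs ->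
  RInt_val (fun x => f x * wt al be A B t x) 0 1 vt ->
  vs - vt = B * IntR (fun u => f u * rho al be u) s t.
Proof.
  intros Ha Hb Hs Hst Ht Hf Hvs Hvt.
  set (g := fun x => f x * wt al be A B s x - f x * wt al be A B t x).
  assert (Hg : RInt_val g 0 1 (vs - vt)) by (apply RInt_val_minus; auto).
  pose proof (RInt_val_intg _ _ _ _ Hg) as pg.
  destruct (intg_sub g 0 1 0 s pg ltac:(lra) ltac:(lra) ltac:(lra)) as [u1 H1].
  destruct (intg_sub g 0 1 s t pg ltac:(lra) ltac:(lra) ltac:(lra)) as [u2 H2].
  destruct (intg_sub g 0 1 t 1 pg ltac:(lra) ltac:(lra) ltac:(lra)) as [u3 H3].
  assert (E := RInt_val_unique _ _ _ _ _ Hg (RInt_val_chasles _ _ _ _ _ _ (RInt_val_chasles _ _ _ _ _ _ H1 H2) H3)).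
  assert (Z1 : u1 = 0).
  { eapply RInt_val_unique. apply H1. apply (RInt_val_open (fun _ => 0)); [lra| |apply RInt_val_zero|eauto].
    intros x Hx. unfold g. rewrite !wt_rho, !theta_neg by lra. ring. }
  assert (Z3 : u3 = 0).
  { eapply RInt_val_unique. apply H3. apply (RInt_val_open (fun _ => 0)); [lra| |apply RInt_val_zero|eauto].
    intros x Hx. unfold g. rewrite !wt_rho, !theta_pos by lra. ring. }
  assert (Hc : forall x, Rmin s t <= x <= Rmax s t -> continuity_pt (fun u => f u * rho al be u) x).
  { intros x Hx. rewrite Rmin_left, Rmax_right in Hx by lra. apply continuity_pt_mult; auto.
    apply rho_cont; lra. }
  destruct (cont_intg _ _ _ Hc) as [v Hv].
  assert (Z2 : u2 = B * IntR (fun u => f u * rho al be u) s t).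
  { eapply RInt_val_unique. apply H2. apply (RInt_val_open (fun x => B * (f x * rho al be x))); [lra| | |eauto].
    - intros x Hx. unfold g. rewrite !wt_rho, theta_pos, theta_neg by lra. ring.
    - apply RInt_val_scal. rewrite (IntR_eq _ _ _ _ Hv). auto. }
  lra.
Qed.

Lemma IntR_swap f a b : (exists v, RInt_val f a b v) -> IntR f a b = - IntR f b a.
Proof. intros [v Hv]. rewrite (IntR_eq _ _ _ _ Hv). rewrite (IntR_eq _ _ _ _ (RInt_val_swap _ _ _ _ Hv)). ring. Qed.

Lemma IntR_same f a : IntR f a a = 0.
Proof. apply IntR_eq. exists (RiemannInt_P7 f a). apply RiemannInt_P9. Qed.

Lemma wdiff al be A B f s t vs vt : al > 0 -> be > 0 -> 0 < s < 1 -> 0 < t < 1 ->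
  (forall x, continuity_pt f x) ->
  RInt_val (fun x => f x * wt al be A B s x) 0 1 vs ->
  RInt_val (fun x => f x * wt al be A B t x) 0 1 vt ->
  vs - vt = B * IntR (fun u => f u * rho al be u) s t.
Proof.
  intros Ha Hb Hs Ht Hf Hvs Hvt. destruct (Rtotal_order s t) as [H|[H|H]].
  - eapply wdiff_lt; eauto; lra.
  - subst. rewrite IntR_same. rewrite (RInt_val_unique _ _ _ _ _ Hvs Hvt). ring.
  - rewrite IntR_swap. pose proof (wdiff_lt al be A B f t s vt vs Ha Hb ltac:(lra) H ltac:(lra) Hf Hvt Hvs). lra.
    apply cont_intg. intros x Hx. apply continuity_pt_mult; auto. apply rho_cont; auto.
    pose proof (Rmin_l s t); pose proof (Rmax_r s t); pose proof (Rmin_r s t); pose proof (Rmax_l s t).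
    unfold Rmin, Rmax in *. destruct (Rle_dec s t); lra.
Qed.

Lemma monic_spoly n q : monic_poly n q -> exists c, c n = 1 /\ forall x, q x = spoly c (S n) x.
Proof. intros [c Hc]. exists (fun k => if Nat.ltb k n then c k else 1). split.
  rewrite Nat.ltb_irrefl; auto. intros x. rewrite Hc. unfold spoly. simpl. rewrite Nat.ltb_irrefl.
  rewrite (sumR_ext_lt (fun k => (if Nat.ltb k n then c k else 1) * x ^ k) (fun k => c k * x ^ k)). ring. intros k Hk. apply Nat.ltb_lt in Hk. rewrite Hk; auto. Qed.

Lemma monic_nonzero n q a b : a < b -> monic_poly n q -> exists x, a < x < b /\ q x <> 0.
Proof. intros Hab Hq. destruct (monic_spoly n q Hq) as [c [Hc1 Hc]].
  destruct (classic (exists x, a < x < b /\ q x <> 0)) as [H|H]; auto. exfalso.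
  assert (Z : c n = 0).
  { apply (poly_zero_interval a b Hab (S n) c); [|lia]. intros x Hx. rewrite <- Hc.
    destruct (Req_dec (q x) 0); auto. exfalso; apply H; exists x; auto. }
  lra. Qed.

Lemma ip_pos al be A B t n q v : al > 0 -> be > 0 -> A >= 0 -> A + B >= 0 -> ~ (A = 0 /\ B = 0) ->
  0 < t < 1 -> monic_poly n q -> RInt_val (fun x => q x * q x * wt al be A B t x) 0 1 v -> v > 0.
Proof.
  intros Ha Hb HA HAB HnAB Ht Hq Hv.
  assert (Hk : exists a b k, 0 <= a /\ a < b /\ b <= 1 /\ k > 0 /\
     forall x, a <= x < b -> wt al be A B t x = k * rho al be x).
  { destruct (Rle_lt_dec A 0).
    - assert (A = 0) by lra. assert (B > 0) by (destruct (Req_dec B 0); [exfalso; apply HnAB; split; auto| lra]).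
      exists t, 1, (A + B). repeat split; try lra. intros x Hx. rewrite wt_rho, theta_pos by lra. ring.
    - exists 0, t, A. repeat split; try lra. intros x Hx. rewrite wt_rho, theta_neg by lra. ring. }
  destruct Hk as [a [b [k [Ha0 [Hab [Hb1 [Hk Hw]]]]]]].
  destruct (monic_nonzero n q a b Hab Hq) as [x0 [Hx0 Hqx0]].
  set (F := fun x => q x * q x * (k * rho al be x)).
  assert (HF0 : F x0 > 0).
  { unfold F. assert (0 < rho al be x0) by (apply rho_pos; lra).
    assert (0 < q x0 * q x0) by (destruct (Rlt_dec (q x0) 0); nra). apply Rmult_lt_0_compat; auto.
    apply Rmult_lt_0_compat; auto. }
  assert (HFc : continuity_pt F x0).
  { unfold F. apply continuity_pt_mult. apply continuity_pt_mult; apply (deg_lt_cont (S n)); apply monic_deg; auto.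
    apply continuity_pt_mult. apply continuity_pt_const. intros u w; auto. apply rho_cont; lra. }
  destruct (cont_eps_inv F x0 HFc (F x0 / 2) ltac:(lra)) as [d [Hd Hd']].
  set (e := Rmin d (Rmin (x0 - a) (b - x0)) / 2).
  assert (He : 0 < e) by (unfold e; apply Rmult_lt_0_compat; [apply Rmin_pos; [auto|apply Rmin_pos; lra]|lra]).
  assert (He1 : e < d) by (unfold e; pose proof (Rmin_l d (Rmin (x0 - a) (b - x0))); lra).
  assert (He2 : e < x0 - a) by (unfold e; pose proof (Rmin_r d (Rmin (x0 - a) (b - x0))); pose proof (Rmin_l (x0 - a) (b - x0)); lra).
  assert (He3 : e < b - x0) by (unfold e; pose proof (Rmin_r d (Rmin (x0 - a) (b - x0))); pose proof (Rmin_r (x0 - a) (b - x0)); lra).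
  set (g := fun x => q x * q x * wt al be A B t x).
  pose proof (RInt_val_intg _ _ _ _ Hv) as pg.
  destruct (intg_sub g 0 1 0 (x0 - e) pg ltac:(lra) ltac:(lra) ltac:(lra)) as [u1 H1].
  destruct (intg_sub g 0 1 (x0 - e) (x0 + e) pg ltac:(lra) ltac:(lra) ltac:(lra)) as [u2 H2].
  destruct (intg_sub g 0 1 (x0 + e) 1 pg ltac:(lra) ltac:(lra) ltac:(lra)) as [u3 H3].
  assert (E := RInt_val_unique _ _ _ _ _ Hv (RInt_val_chasles _ _ _ _ _ _ (RInt_val_chasles _ _ _ _ _ _ H1 H2) H3)).
  assert (gnn : forall x, 0 < x < 1 -> 0 <= g x).
  { intros x Hx. unfold g. rewrite wt_rho. apply Rmult_le_pos. destruct (Rle_dec 0 (q x)); nra.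
    apply Rmult_le_pos. apply rho_bound; lra. unfold theta. destruct (Rlt_dec (x - t) 0); lra. }
  assert (U1 : 0 <= u1).
  { apply (RInt_val_le (fun _ => 0) g 0 (x0 - e)); auto; [lra| |apply RInt_val_zero]. intros x Hx. apply gnn; lra. }
  assert (U3 : 0 <= u3).
  { apply (RInt_val_le (fun _ => 0) g (x0 + e) 1); auto; [lra| |apply RInt_val_zero]. intros x Hx. apply gnn; lra. }
  assert (U2 : F x0 / 2 * ((x0 + e) - (x0 - e)) <= u2).
  { apply (RInt_val_le (fun _ => F x0 / 2) g (x0 - e) (x0 + e)); auto; [lra| |apply RInt_val_const].
    intros x Hx. unfold g. rewrite Hw by lra. fold (F x).
    assert (Hy : Rabs (x - x0) < d) by (apply Rabs_def1; lra). specialize (Hd' x Hy).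
    apply Rabs_def2 in Hd'. lra. }
  nra.
Qed.

Definition Hyp (al be A B : R) (P : nat -> R -> R -> R) (h : nat -> R -> R) : Prop :=
  al > 0 /\ be > 0 /\ A >= 0 /\ A + B >= 0 /\ ~ (A = 0 /\ B = 0) /\
  (forall n t, 0 < t < 1 -> monic_poly n (P n t)) /\
  (forall i j t, 0 < t < 1 -> RInt_val (fun x => P i t x * P j t x * wt al be A B t x) 0 1 (Gm (fun k => h k t) i j)).


Lemma hyp_mon al be A B P h : Hyp al be A B P h -> forall t, 0 < t < 1 -> forall n, monic_poly n (P n t).
Proof. intros (_&_&_&_&_&H&_) t Ht n. auto. Qed.
Lemma hyp_ip al be A B P h : Hyp al be A B P h -> forall t, 0 < t < 1 -> forall i j,
  RInt_val (fun x => P i t x * P j t x * wt al be A B t x) 0 1 (Gm (fun k => h k t) i j).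
Proof. intros (_&_&_&_&_&_&H) t Ht i j. auto. Qed.

Lemma h_pos al be A B P h : Hyp al be A B P h -> forall t, 0 < t < 1 -> forall i, h i t > 0.
Proof. intros HY t Ht i. pose proof HY as (Ha&Hb&HA&HAB&HnAB&_).
  assert (E := hyp_ip _ _ _ _ _ _ HY t Ht i i). unfold Gm in E. rewrite Nat.eqb_refl in E.
  exact (ip_pos al be A B t i (P i t) (h i t) Ha Hb HA HAB HnAB Ht (hyp_mon al be A B P h HY t Ht i) E). Qed.

Lemma h_nz al be A B P h : Hyp al be A B P h -> forall t, 0 < t < 1 -> forall i, h i t <> 0.
Proof. intros HY t Ht i. pose proof (h_pos _ _ _ _ _ _ HY t Ht i). lra. Qed.

Lemma hintg al be A B P h : Hyp al be A B P h -> forall t, 0 < t < 1 -> forall N q k,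
  deg_lt N q -> exists v, RInt_val (fun x => q x * P k t x * wt al be A B t x) 0 1 v.
Proof. intros HY t Ht N q k Hq. apply (ip_intg (fun k => P k t) _ (fun k => h k t)) with N; auto.
  apply (hyp_mon al be A B P h HY); auto. apply hyp_ip; auto. Qed.

Lemma horth al be A B P h : Hyp al be A B P h -> forall t, 0 < t < 1 -> forall q k,
  deg_lt k q -> RInt_val (fun x => q x * P k t x * wt al be A B t x) 0 1 0.
Proof. intros HY t Ht q k Hq. apply (ip_orth (fun k => P k t) _ (fun k => h k t)); auto.
  apply (hyp_mon al be A B P h HY); auto. apply hyp_ip; auto. Qed.

Lemma hmon_deg al be A B P h : Hyp al be A B P h -> forall t, 0 < t < 1 -> forall j N,
  (j < N)%nat -> deg_lt N (P j t).
Proof. intros HY t Ht j N Hj. apply deg_lt_mono with (S j); [lia|]. apply monic_deg.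
  apply (hyp_mon al be A B P h HY); auto. Qed.

Lemma poly_cont al be A B P h : Hyp al be A B P h -> forall t, 0 < t < 1 -> forall j x,
  continuity_pt (P j t) x.
Proof. intros HY t Ht j x. apply (deg_lt_cont (S j)). apply (hmon_deg al be A B P h HY); auto. Qed.

Definition acoef al be B (P : nat -> R -> R -> R) (h : nat -> R -> R) n t s j : R :=
  B * IntR (fun u => P n s u * P j t u * rho al be u) t s / h j t.

Lemma cross_ip al be A B P h : Hyp al be A B P h -> forall s t, 0 < s < 1 -> 0 < t < 1 -> forall n j,
  (j < n)%nat ->
  RInt_val (fun x => (P n s x - P n t x) * P j t x * wt al be A B t x) 0 1
    (B * IntR (fun u => P n s u * P j t u * rho al be u) t s).
Proof.
  intros HY s t Hs Ht n j Hj. pose proof HY as (Ha&Hb&_).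
  destruct (hintg _ _ _ _ _ _ HY t Ht (S n) (P n s) j) as [vt Hvt].
  { apply (hmon_deg al be A B P h HY); auto. }
  assert (H0s : RInt_val (fun x => P j t x * P n s x * wt al be A B s x) 0 1 0).
  { apply (horth al be A B P h HY); auto. apply (hmon_deg al be A B P h HY); auto. }
  assert (H0t : RInt_val (fun x => P n t x * P j t x * wt al be A B t x) 0 1 0).
  { assert (E := hyp_ip _ _ _ _ _ _ HY t Ht n j). unfold Gm in E. destruct (Nat.eqb_spec n j); [lia|auto]. }
  assert (E := wdiff al be A B (fun x => P n s x * P j t x) s t 0 vt Ha Hb Hs Ht
     ltac:(intros x; apply continuity_pt_mult; apply (poly_cont al be A B P h HY); auto)
     ltac:(apply RInt_val_ext with (2 := H0s); intros; ring) ltac:(apply RInt_val_ext with (2 := Hvt); intros; ring)).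
  rewrite IntR_swap in E.
  - replace (B * IntR (fun u => P n s u * P j t u * rho al be u) t s) with (vt - 0) by lra.
    apply RInt_val_ext with (fun x => P n s x * P j t x * wt al be A B t x - P n t x * P j t x * wt al be A B t x).
    intros; ring. apply RInt_val_minus; auto.
  - apply cont_intg. intros x Hx. apply continuity_pt_mult. apply continuity_pt_mult; apply (poly_cont al be A B P h HY); auto.
    apply rho_cont; auto. pose proof (Rmin_l s t); pose proof (Rmax_r s t); pose proof (Rmin_r s t); pose proof (Rmax_l s t).
    unfold Rmin, Rmax in *. destruct (Rle_dec s t); lra.
Qed.

Lemma expansion al be A B P h : Hyp al be A B P h -> forall s t, 0 < s < 1 -> 0 < t < 1 -> forall n x,
  P n s x - P n t x = sumR (fun j => acoef al be B P h n t s j * P j t x) n.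
Proof.
  intros HY s t Hs Ht n x. unfold acoef.
  apply (expand (fun k => P k t) (wt al be A B t) (fun k => h k t)
    (hyp_mon _ _ _ _ _ _ HY t Ht) (hyp_ip _ _ _ _ _ _ HY t Ht) (h_nz _ _ _ _ _ _ HY t Ht) n
    (fun x => P n s x - P n t x)).
  - apply monic_diff; apply (hyp_mon al be A B P h HY); auto.
  - intros j Hj. apply (cross_ip al be A B P h HY); auto.
Qed.

Lemma hdiff al be A B P h : Hyp al be A B P h -> forall s t, 0 < s < 1 -> 0 < t < 1 -> forall m,
  h m s - h m t = - B * IntR (fun u => P m s u * P m t u * rho al be u) t s.
Proof.
  intros HY s t Hs Ht m. pose proof HY as (Ha&Hb&_).
  assert (Dg : deg_lt m (fun x => P m s x - P m t x)) by (apply monic_diff; apply hyp_mon with al be A B h; auto).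
  assert (Es := hyp_ip _ _ _ _ _ _ HY s Hs m m). unfold Gm in Es; rewrite Nat.eqb_refl in Es.
  assert (Et := hyp_ip _ _ _ _ _ _ HY t Ht m m). unfold Gm in Et; rewrite Nat.eqb_refl in Et.
  assert (Os := horth _ _ _ _ _ _ HY s Hs _ m Dg).
  assert (Ot := horth _ _ _ _ _ _ HY t Ht _ m Dg).
  assert (Vs : RInt_val (fun x => (P m s x * P m t x) * wt al be A B s x) 0 1 (h m s - 0)).
  { apply RInt_val_ext with (2 := RInt_val_minus _ _ _ _ _ _ Es Os). intros; ring. }
  assert (Vt : RInt_val (fun x => (P m s x * P m t x) * wt al be A B t x) 0 1 (h m t + 0)).
  { apply RInt_val_ext with (2 := RInt_val_plus _ _ _ _ _ _ Et Ot). intros; ring. }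
  assert (E := wdiff al be A B (fun x => P m s x * P m t x) s t _ _ Ha Hb Hs Ht
     ltac:(intros x; apply continuity_pt_mult; apply (poly_cont al be A B P h HY); auto) Vs Vt).
  rewrite IntR_swap in E.
  - lra.
  - apply cont_intg. intros x Hx. apply continuity_pt_mult. apply continuity_pt_mult; apply (poly_cont al be A B P h HY); auto.
    apply rho_cont; auto. pose proof (Rmin_l s t); pose proof (Rmax_r s t); pose proof (Rmin_r s t); pose proof (Rmax_l s t).
    unfold Rmin, Rmax in *. destruct (Rle_dec s t); lra.
Qed.

Lemma poly_bnd N q : deg_lt N q -> exists M, forall u, 0 <= u <= 1 -> Rabs (q u) <= M.
Proof. intros [c Hc]. exists (sumR (fun k => Rabs (c k)) N). intros u Hu. rewrite Hc.
  apply spoly_bound. rewrite Rabs_pos_eq; lra. Qed.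

Lemma polys_bnd (Q : nat -> R -> R) (Hd : forall k, deg_lt (S k) (Q k)) n :
  exists M, M >= 1 /\ forall k u, (k <= n)%nat -> 0 <= u <= 1 -> Rabs (Q k u) <= M.
Proof.
  induction n.
  - destruct (poly_bnd _ _ (Hd 0%nat)) as [M HM]. exists (Rmax M 1). split. apply Rle_ge, Rmax_r.
    intros k u Hk Hu. assert (k = 0%nat) by lia. subst. eapply Rle_trans. apply HM; auto. apply Rmax_l.
  - destruct IHn as [M [HM1 HM]]. destruct (poly_bnd _ _ (Hd (S n))) as [M' HM'].
    exists (Rmax M M'). split. pose proof (Rmax_l M M'). lra.
    intros k u Hk Hu. destruct (Nat.eq_dec k (S n)).
    + subst. eapply Rle_trans. apply HM'; auto. apply Rmax_r.
    + eapply Rle_trans. apply HM; auto; lia. apply Rmax_l.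
Qed.

Lemma between_in a b u : 0 < a < 1 -> 0 < b < 1 -> Rmin a b < u < Rmax a b -> 0 < u < 1 /\ Rabs (u - a) < Rabs (b - a).
Proof. intros Ha Hb Hu. unfold Rmin, Rmax in Hu. destruct (Rle_dec a b).
  - split. lra. rewrite !Rabs_pos_eq; lra.
  - split. lra. rewrite !Rabs_left; lra. Qed.

Lemma unif al be A B P h : Hyp al be A B P h -> forall t, 0 < t < 1 -> forall n,
  exists C d, C >= 0 /\ d > 0 /\ forall s, 0 < s < 1 -> Rabs (s - t) < d ->
   forall u, 0 <= u <= 1 -> Rabs (P n s u - P n t u) <= C * Rabs (s - t).
Proof.
  intros HY t Ht n. pose proof HY as (Ha&Hb&_).
  destruct (polys_bnd (fun k => P k t) (fun k => monic_deg _ _ (hyp_mon _ _ _ _ _ _ HY t Ht k)) n) as [M [HM1 HM]].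
  set (Hs := sumR (fun j => / h j t) n).
  assert (Hs0 : 0 <= Hs) by (apply sumR_nonneg; intros j; left; apply Rinv_0_lt_compat, (h_pos _ _ _ _ _ _ HY t Ht)).
  set (K := Rabs B * M * M * Hs).
  assert (K0 : 0 <= K) by (unfold K; repeat apply Rmult_le_pos; try lra; apply Rabs_pos).
  exists (2 * K * M), (/ (2 * K + 1)). split; [nra|]. split; [apply Rlt_gt, Rinv_0_lt_compat; lra|].
  intros s Hs1 Hst u Hu.
  set (a := fun j => acoef al be B P h n t s j).
  set (S := sumR (fun j => Rabs (a j)) n).
  assert (S0 : 0 <= S) by (apply sumR_nonneg; intros; apply Rabs_pos).
  assert (Hexp : forall u, 0 <= u <= 1 -> Rabs (P n s u - P n t u) <= M * S).
  { intros v Hv. rewrite (expansion _ _ _ _ _ _ HY s t Hs1 Ht n v). eapply Rle_trans. apply sumR_abs.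
    unfold S. rewrite <- sumR_scal. apply sumR_le. intros j Hj. rewrite Rabs_mult, Rmult_comm.
    apply Rmult_le_compat_r. apply Rabs_pos. apply HM; auto; lia. }
  assert (Hbd : forall v, 0 <= v <= 1 -> Rabs (P n s v) <= M + M * S).
  { intros v Hv. replace (P n s v) with (P n t v + (P n s v - P n t v)) by ring.
    eapply Rle_trans. apply Rabs_triang. apply Rplus_le_compat. apply HM; auto. apply Hexp; auto. }
  assert (Ha_j : forall j, (j < n)%nat -> Rabs (a j) <= Rabs B * ((M + M * S) * M * Rabs (s - t)) * / h j t).
  { intros j Hj. unfold a, acoef. unfold Rdiv. rewrite !Rabs_mult. rewrite (Rabs_pos_eq (/ h j t)).
    2: left; apply Rinv_0_lt_compat, (h_pos _ _ _ _ _ _ HY t Ht).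
    apply Rmult_le_compat_r. left; apply Rinv_0_lt_compat, (h_pos _ _ _ _ _ _ HY t Ht).
    apply Rmult_le_compat_l. apply Rabs_pos.
    destruct (cont_intg (fun u => P n s u * P j t u * rho al be u) t s) as [v Hv].
    { intros x Hx. apply continuity_pt_mult. apply continuity_pt_mult; apply (poly_cont _ _ _ _ _ _ HY); auto.
      apply rho_cont; auto. unfold Rmin, Rmax in Hx. destruct (Rle_dec t s); lra. }
    rewrite (IntR_eq _ _ _ _ Hv).
    apply (RInt_val_bound_or (fun u => P n s u * P j t u * rho al be u)); auto.
    intros x Hx. destruct (between_in t s x Ht Hs1 Hx) as [Hx1 _].
    rewrite !Rabs_mult. rewrite (Rabs_pos_eq (rho al be x)) by (apply rho_bound; lra).
    assert (rho al be x <= 1) by (apply rho_bound; lra).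
    assert (Rabs (P j t x) <= M) by (apply HM; lia || lra).
    assert (Rabs (P n s x) <= M + M * S) by (apply Hbd; lra).
    pose proof (Rabs_pos (P j t x)). pose proof (Rabs_pos (P n s x)). pose proof (rho_bound al be x ltac:(lra) ltac:(lra) ltac:(lra)).
    apply Rle_trans with ((M + M * S) * M * 1). 2: lra.
    assert (Rabs (P n s x) * Rabs (P j t x) <= (M + M * S) * M) by (apply Rmult_le_compat; lra).
    apply Rmult_le_compat; try lra. apply Rmult_le_pos; lra. }
  assert (HS : S <= K * (1 + S) * Rabs (s - t)).
  { apply Rle_trans with (sumR (fun j => Rabs B * ((M + M * S) * M * Rabs (s - t)) * / h j t) n).
    apply sumR_le; auto. rewrite sumR_scal. unfold K. fold Hs. nra. }
  assert (Hd : K * Rabs (s - t) <= / 2).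
  { apply Rle_trans with (K * / (2 * K + 1)). apply Rmult_le_compat_l; lra.
    apply Rmult_le_reg_l with (2 * (2 * K + 1)). lra. field_simplify; lra. }
  assert (S <= 2 * K * Rabs (s - t)) by nra.
  eapply Rle_trans. apply Hexp; auto. pose proof (Rabs_pos (s - t)). nra.
Qed.

Lemma Lstar al be A B P h : Hyp al be A B P h -> forall t, 0 < t < 1 -> forall n (Q : R -> R) MQ,
  (forall u, 0 <= u <= 1 -> Rabs (Q u) <= MQ) -> (forall u, continuity_pt Q u) ->
  derivable_pt_lim (fun s => IntR (fun u => P n s u * Q u * rho al be u) t s) t (P n t t * Q t * rho al be t).
Proof.
  intros HY t Ht n Q MQ HQb HQc. pose proof HY as (Ha&Hb&_).
  destruct (unif _ _ _ _ _ _ HY t Ht n) as [C [d0 [HC [Hd0 Hu]]]].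
  set (l := P n t t * Q t * rho al be t).
  assert (MQ0 : 0 <= MQ) by (pose proof (HQb 0 ltac:(lra)); pose proof (Rabs_pos (Q 0)); lra).
  intros e He.
  assert (Gc : continuity_pt (fun u => P n t u * Q u * rho al be u) t).
  { apply continuity_pt_mult. apply continuity_pt_mult; auto. apply (poly_cont _ _ _ _ _ _ HY); auto.
    apply rho_cont; lra. }
  destruct (cont_eps_inv _ _ Gc (e / 2) ltac:(lra)) as [d1 [Hd1 Hd1']].
  set (d := Rmin (Rmin d0 d1) (Rmin (Rmin t (1 - t)) (e / (2 * (C * MQ + 1))))).
  assert (Hdp : 0 < d).
  { unfold d. repeat apply Rmin_pos; try lra. apply Rdiv_lt_0_compat; try lra. nra. }
  exists (mkposreal d Hdp). intros hh Hh0 Hh. simpl in Hh.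
  assert (Hd_0 : Rabs hh < d0) by (eapply Rlt_le_trans; [exact Hh|]; unfold d; eapply Rle_trans; apply Rmin_l).
  assert (Hd_1 : Rabs hh < d1) by (eapply Rlt_le_trans; [exact Hh|]; unfold d; eapply Rle_trans; [apply Rmin_l|apply Rmin_r]).
  assert (Hd_t : Rabs hh < Rmin t (1 - t)) by (eapply Rlt_le_trans; [exact Hh|]; unfold d; eapply Rle_trans; [apply Rmin_r|apply Rmin_l]).
  assert (Hd_e : Rabs hh < e / (2 * (C * MQ + 1))) by (eapply Rlt_le_trans; [exact Hh|]; unfold d; eapply Rle_trans; apply Rmin_r).
  set (s := t + hh).
  assert (Hs : 0 < s < 1).
  { unfold s. pose proof (Rmin_l t (1-t)); pose proof (Rmin_r t (1-t)). apply Rabs_def2 in Hd_t. lra. }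
  rewrite IntR_same. rewrite Rminus_0_r.
  destruct (cont_intg (fun u => P n s u * Q u * rho al be u) t s) as [v Hv].
  { intros x Hx. apply continuity_pt_mult. apply continuity_pt_mult; auto. apply (poly_cont _ _ _ _ _ _ HY); auto.
    apply rho_cont; auto. unfold Rmin, Rmax in Hx. destruct (Rle_dec t s); lra. }
  fold s. rewrite (IntR_eq _ _ _ _ Hv).
  assert (Hv2 := RInt_val_minus _ _ _ _ _ _ Hv (RInt_val_const t s l)).
  assert (B1 : Rabs (v - l * (s - t)) <= (C * Rabs hh * MQ + e / 2) * Rabs (s - t)).
  { apply (RInt_val_bound_or (fun u => P n s u * Q u * rho al be u - l)); auto.
    intros x Hx. destruct (between_in t s x Ht Hs Hx) as [Hx1 Hx2].
    replace (P n s x * Q x * rho al be x - l) with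
      ((P n s x - P n t x) * Q x * rho al be x + (P n t x * Q x * rho al be x - l)) by ring.
    eapply Rle_trans. apply Rabs_triang. apply Rplus_le_compat.
    - rewrite !Rabs_mult. rewrite (Rabs_pos_eq (rho al be x)) by (apply rho_bound; lra).
      pose proof (rho_bound al be x ltac:(lra) ltac:(lra) ltac:(lra)).
      assert (E1 : Rabs (P n s x - P n t x) <= C * Rabs hh).
      { replace hh with (s - t) by (unfold s; ring). apply Hu; auto. unfold s. replace (t + hh - t) with hh by ring. auto. lra. }
      assert (E2 := HQb x ltac:(lra)).
      pose proof (Rabs_pos (P n s x - P n t x)). pose proof (Rabs_pos (Q x)).
      apply Rle_trans with (C * Rabs hh * MQ * 1). 2: lra.
      apply Rmult_le_compat; try lra. apply Rmult_le_pos; lra. apply Rmult_le_compat; lra.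
    - left. apply Hd1'. unfold s in Hx2. replace (t + hh - t) with hh in Hx2 by ring. lra. }
  replace (s - t) with hh in B1 by (unfold s; ring).
  assert (Hce : C * Rabs hh * MQ < e / 2).
  { destruct (Req_dec (C * MQ) 0) as [Z|Z]. replace (C * Rabs hh * MQ) with (C * MQ * Rabs hh) by ring. rewrite Z. lra.
    apply Rle_lt_trans with ((C * MQ) * (e / (2 * (C * MQ + 1)))).
    replace (C * Rabs hh * MQ) with (C * MQ * Rabs hh) by ring. apply Rmult_le_compat_l. nra. lra.
    apply Rmult_lt_reg_r with (2 * (C * MQ + 1)). nra. field_simplify; nra. }
  replace (v / hh - l) with ((v - l * hh) / hh) by (field; auto).
  unfold Rdiv. rewrite Rabs_mult, Rabs_inv.
  assert (0 < Rabs hh) by (apply Rabs_pos_lt; auto).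
  apply Rmult_lt_reg_r with (Rabs hh); auto. rewrite Rmult_assoc, Rinv_l by lra.
  nra.
Qed.

Lemma dpl_ext (f g : R -> R) x l : (forall y, f y = g y) -> derivable_pt_lim g x l -> derivable_pt_lim f x l.
Proof. intros H. apply derivable_pt_lim_loc. exists 1. split; [lra|]. intros; auto. Qed.

Lemma near_open t : 0 < t < 1 -> exists d, d > 0 /\ forall y, Rabs (y - t) < d -> 0 < y < 1.
Proof. intros Ht. exists (Rmin t (1 - t)). split. apply Rmin_pos; lra. intros y Hy.
  pose proof (Rmin_l t (1-t)); pose proof (Rmin_r t (1-t)). apply Rabs_def2 in Hy. lra. Qed.

Definition Dble (f : R -> R) x := exists l, derivable_pt_lim f x l.
Lemma Dble_plus f g x : Dble f x -> Dble g x -> Dble (fun y => f y + g y) x.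
Proof. intros [l1 H1] [l2 H2]. exists (l1 + l2). apply (derivable_pt_lim_plus f g); auto. Qed.
Lemma Dble_mult f g x : Dble f x -> Dble g x -> Dble (fun y => f y * g y) x.
Proof. intros [l1 H1] [l2 H2]. eexists. apply (derivable_pt_lim_mult f g); eauto. Qed.
Lemma Dble_const k x : Dble (fun _ => k) x.
Proof. exists 0. apply derivable_pt_lim_const. Qed.
Lemma Dble_id x : Dble (fun y => y) x.
Proof. exists 1. apply derivable_pt_lim_id. Qed.
Lemma Dble_inv f x : Dble f x -> f x <> 0 -> Dble (fun y => / f y) x.
Proof. intros [l H] Hn. eexists. apply dpl_ext with (fun y => 1 / f y). intros; unfold Rdiv; ring.
  apply (derivable_pt_lim_div (fun _ => 1) f); eauto. apply derivable_pt_lim_const. Qed.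
Lemma Dble_loc f g x : (exists d, d > 0 /\ forall y, Rabs (y - x) < d -> f y = g y) -> Dble g x -> Dble f x.
Proof. intros H [l Hl]. exists l. eapply derivable_pt_lim_loc; eauto. Qed.
Lemma Dble_ext f g x : (forall y, f y = g y) -> Dble g x -> Dble f x.
Proof. intros H. apply Dble_loc. exists 1. split; [lra|]. auto. Qed.
Lemma Dble_sumR (F : nat -> R -> R) N x : (forall k, (k < N)%nat -> Dble (F k) x) ->
  Dble (fun y => sumR (fun k => F k y) N) x.
Proof. induction N; intros H; simpl. apply Dble_const. apply Dble_plus. apply IHN; intros; apply H; lia. apply H; lia. Qed.
Lemma Dble_poly N q x : deg_lt N q -> Dble q x.
Proof. intros [c Hc]. apply Dble_ext with (spoly c N). auto. exists (dspoly c N x). apply spoly_deriv. Qed.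

Lemma Dble_pw a x : 0 < x -> Dble (fun u => pw u a) x.
Proof. intros Hx. eexists. apply pw_deriv_pos; auto. Qed.
Lemma Dble_pw1m a x : x < 1 -> Dble (fun u => pw (1 - u) a) x.
Proof. intros Hx. eexists. apply (derivable_pt_lim_comp (fun u => 1 - u) (fun v => pw v a)).
  apply (derivable_pt_lim_minus (fun _ => 1) (fun u => u)). apply derivable_pt_lim_const. apply derivable_pt_lim_id.
  apply pw_deriv_pos. lra. Qed.

Lemma deriv_a al be A B P h : Hyp al be A B P h -> forall t, 0 < t < 1 -> forall n j,
  derivable_pt_lim (fun s => acoef al be B P h n t s j) t (B * (P n t t * P j t t * rho al be t) / h j t).
Proof.
  intros HY t Ht n j. destruct (poly_bnd (S j) (P j t)) as [MQ HMQ].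
  { apply monic_deg. apply (hyp_mon _ _ _ _ _ _ HY); auto. }
  assert (L := Lstar _ _ _ _ _ _ HY t Ht n (P j t) MQ HMQ (poly_cont _ _ _ _ _ _ HY t Ht j)).
  apply dpl_ext with (fun s => (B / h j t) * IntR (fun u => P n s u * P j t u * rho al be u) t s).
  intros y. unfold acoef. unfold Rdiv. ring.
  replace (B * (P n t t * P j t t * rho al be t) / h j t) with ((B / h j t) * (P n t t * P j t t * rho al be t)) by (unfold Rdiv; ring).
  apply derivable_pt_lim_scal. auto.
Qed.

Lemma Dble_h al be A B P h : Hyp al be A B P h -> forall t, 0 < t < 1 -> forall m, Dble (h m) t.
Proof.
  intros HY t Ht m. destruct (poly_bnd (S m) (P m t)) as [MQ HMQ].
  { apply monic_deg. apply (hyp_mon _ _ _ _ _ _ HY); auto. }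
  assert (L := Lstar _ _ _ _ _ _ HY t Ht m (P m t) MQ HMQ (poly_cont _ _ _ _ _ _ HY t Ht m)).
  apply Dble_loc with (fun s => h m t + (- B) * IntR (fun u => P m s u * P m t u * rho al be u) t s).
  - destruct (near_open t Ht) as [d [Hd Hy]]. exists d. split; auto. intros y Hyd.
    pose proof (hdiff _ _ _ _ _ _ HY y t (Hy y Hyd) Ht m). lra.
  - apply Dble_plus. apply Dble_const. eexists. apply derivable_pt_lim_scal. eauto.
Qed.

Lemma Dble_diag al be A B P h : Hyp al be A B P h -> forall t, 0 < t < 1 -> forall n, Dble (fun s => P n s s) t.
Proof.
  intros HY t Ht n.
  apply Dble_loc with (fun s => P n t s + sumR (fun j => acoef al be B P h n t s j * P j t s) n).
  - destruct (near_open t Ht) as [d [Hd Hy]]. exists d. split; auto. intros y Hyd.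
    pose proof (expansion _ _ _ _ _ _ HY y t (Hy y Hyd) Ht n y). lra.
  - apply Dble_plus. apply (Dble_poly (S n)). apply monic_deg, (hyp_mon _ _ _ _ _ _ HY); auto.
    apply Dble_sumR. intros k Hk. apply Dble_mult. eexists. apply (deriv_a _ _ _ _ _ _ HY); auto.
    apply (Dble_poly (S k)). apply monic_deg, (hyp_mon _ _ _ _ _ _ HY); auto.
Qed.

Lemma Dble_r al be A B P h : Hyp al be A B P h -> forall t, 0 < t < 1 -> forall n,
  Dble (r_fun al be B P h n) t.
Proof.
  intros HY t Ht n. destruct n as [|m].
  - apply Dble_ext with (fun _ => 0). intros; reflexivity. apply Dble_const.
  - apply Dble_ext with (fun s => B * pw s al * pw (1 - s) be * P (S m) s s * P m s s * / h m s).
    intros; reflexivity.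
    repeat apply Dble_mult; try apply Dble_const.
    apply Dble_pw; lra. apply Dble_pw1m; lra. apply (Dble_diag _ _ _ _ _ _ HY); auto.
    apply (Dble_diag _ _ _ _ _ _ HY); auto. apply Dble_inv. apply (Dble_h _ _ _ _ _ _ HY); auto.
    apply (h_nz _ _ _ _ _ _ HY); auto.
Qed.

Lemma coef_shift al be A B P h : Hyp al be A B P h -> forall s t, 0 < s < 1 -> 0 < t < 1 -> forall m cs ct,
  (forall x, P (S m) s x = x ^ (S m) + spoly cs (S m) x) ->
  (forall x, P (S m) t x = x ^ (S m) + spoly ct (S m) x) ->
  cs m = ct m + acoef al be B P h (S m) t s m.
Proof.
  intros HY s t Hs Ht m cs ct Hcs Hct.
  destruct (hyp_mon _ _ _ _ _ _ HY t Ht m) as [d Hd].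
  assert (Hr : deg_lt m (fun x => acoef al be B P h (S m) t s m * spoly d m x +
      sumR (fun j => acoef al be B P h (S m) t s j * P j t x) m)).
  { apply deg_lt_plus. apply deg_lt_scal. exists d; auto.
    apply deg_lt_sumR. intros k Hk. apply deg_lt_scal. apply (hmon_deg _ _ _ _ _ _ HY); auto. }
  destruct Hr as [e He].
  set (e' := fun k => if Nat.ltb k m then e k else acoef al be B P h (S m) t s m).
  assert (E : forall x, 0 < x < 1 -> spoly (fun k => cs k - ct k) (S m) x = spoly e' (S m) x).
  { intros x Hx. transitivity (P (S m) s x - P (S m) t x).
    - rewrite Hcs, Hct. unfold spoly.
      rewrite (sumR_ext (fun k => (cs k - ct k) * x ^ k) (fun k => cs k * x ^ k + (-1) * (ct k * x ^ k))) by (intros; ring).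
      rewrite sumR_plus, sumR_scal. ring.
    - rewrite (expansion _ _ _ _ _ _ HY s t Hs Ht (S m) x). simpl. rewrite Hd.
      unfold spoly at 1. simpl. unfold e'. rewrite Nat.ltb_irrefl.
      rewrite (sumR_ext_lt (fun k => (if Nat.ltb k m then e k else acoef al be B P h (S m) t s m) * x ^ k) (fun k => e k * x ^ k)).
      + fold (spoly e m x). rewrite <- He. cbv beta. unfold spoly. ring.
      + intros k Hk. apply Nat.ltb_lt in Hk. rewrite Hk. auto. }
  assert (U := spoly_unique 0 1 (S m) _ _ ltac:(lra) E m ltac:(lia)). unfold e' in U. rewrite Nat.ltb_irrefl in U.
  lra.
Qed.

Definition mono n c x := x ^ n + spoly c n x.
Definition dmono n c x := INR n * x ^ pred n + dspoly c n x.

Lemma spoly_S c N x : spoly c (S N) x = spoly c N x + c N * x ^ N.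
Proof. reflexivity. Qed.
Lemma mono_deriv n c x : derivable_pt_lim (mono n c) x (dmono n c x).
Proof. apply (derivable_pt_lim_plus (fun x => x ^ n) (spoly c n)). apply derivable_pt_lim_pow. apply spoly_deriv. Qed.

Lemma x_pow_pred x k : x * (INR k * x ^ pred k) = INR k * x ^ k.
Proof. destruct k. simpl. ring. simpl. ring. Qed.

Lemma xdmono n c x : x * dmono n c x = INR n * mono n c x + spoly (fun k => (INR k - INR n) * c k) n x.
Proof. unfold dmono, mono, dspoly, spoly. rewrite Rmult_plus_distr_l, x_pow_pred.
  rewrite <- sumR_scal. rewrite (sumR_ext (fun k => x * (c k * (INR k * x ^ pred k))) (fun k => c k * (INR k * x ^ k))).
  2: intros k; rewrite <- x_pow_pred; ring.
  rewrite (sumR_ext (fun k => (INR k - INR n) * c k * x ^ k) (fun k => c k * (INR k * x ^ k) + (- INR n) * (c k * x ^ k))) by (intros; ring).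
  rewrite sumR_plus, sumR_scal. ring.
Qed.

Lemma xdmono_deg n c : deg_lt (S n) (fun x => x * dmono n c x).
Proof. apply deg_lt_ext with (fun x => INR n * mono n c x + spoly (fun k => (INR k - INR n) * c k) n x).
  intros; rewrite xdmono; auto. apply deg_lt_plus. apply deg_lt_scal. unfold mono. apply deg_lt_plus.
  apply deg_lt_mon. apply deg_lt_S. exists c; auto. apply deg_lt_S. exists (fun k => (INR k - INR n) * c k). auto. Qed.

Lemma mono_of al be A B P h : Hyp al be A B P h -> forall s, 0 < s < 1 -> forall n,
  exists c, forall x, P n s x = mono n c x.
Proof. intros HY s Hs n. destruct (hyp_mon _ _ _ _ _ _ HY s Hs n) as [c Hc]. exists c. auto. Qed.

Lemma ip_xd1 al be A B P h : Hyp al be A B P h -> forall s, 0 < s < 1 -> forall m cs cm,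
  (forall x, P (S m) s x = mono (S m) cs x) -> (forall x, P m s x = mono m cm x) ->
  RInt_val (fun u => (u * dmono (S m) cs u) * P m s u * wt al be A B s u) 0 1 (- cs m * h m s).
Proof.
  intros HY s Hs m cs cm Hn Hm.
  set (R0 := fun u => spoly (fun k => (INR k - INR (S m)) * cs k) m u + cs m * spoly cm m u).
  assert (HR : deg_lt m R0).
  { unfold R0. apply deg_lt_plus. exists (fun k => (INR k - INR (S m)) * cs k); auto.
    apply deg_lt_scal. exists cm; auto. }
  assert (Id : forall u, u * dmono (S m) cs u = INR (S m) * P (S m) s u + (- cs m) * P m s u + R0 u).
  { intros u. rewrite xdmono, Hn, Hm. unfold R0, mono. rewrite !spoly_S. rewrite S_INR. ring. }
  assert (E1 := hyp_ip _ _ _ _ _ _ HY s Hs (S m) m). unfold Gm in E1. destruct (Nat.eqb_spec (S m) m); [lia|].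
  assert (E2 := hyp_ip _ _ _ _ _ _ HY s Hs m m). unfold Gm in E2. rewrite Nat.eqb_refl in E2.
  assert (E3 := horth _ _ _ _ _ _ HY s Hs R0 m HR).
  apply RInt_val_ext with (fun u => (INR (S m) * (P (S m) s u * P m s u * wt al be A B s u) +
     (- cs m) * (P m s u * P m s u * wt al be A B s u)) + R0 u * P m s u * wt al be A B s u).
  intros u. rewrite Id. ring.
  replace (- cs m * h m s) with ((INR (S m) * 0 + (- cs m) * h m s) + 0) by ring.
  apply RInt_val_plus; auto. apply RInt_val_plus; apply RInt_val_scal; auto.
Qed.

Lemma ip_xd2 al be A B P h : Hyp al be A B P h -> forall s, 0 < s < 1 -> forall m cm,
  (forall x, P m s x = mono m cm x) ->
  RInt_val (fun u => P (S m) s u * (u * dmono m cm u) * wt al be A B s u) 0 1 0.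
Proof.
  intros HY s Hs m cm Hm. apply RInt_val_ext with (fun u => (u * dmono m cm u) * P (S m) s u * wt al be A B s u).
  intros; ring. apply (horth _ _ _ _ _ _ HY); auto. apply xdmono_deg.
Qed.

Lemma pw_plus1' x a : pw x (a + 1) = x * pw x a.
Proof. destruct (Rle_dec x 0). rewrite !pw_le0 by auto. ring. apply pw_plus1. lra. Qed.

Definition gfun al be u := pw u (al + 1) * pw (1 - u) be.
Definition dgfun al be u := (al + 1) * pw u al * pw (1 - u) be + pw u (al + 1) * (be * pw (1 - u) (be - 1) * (0 - 1)).

Lemma gfun_deriv al be u : al > 0 -> u < 1 -> derivable_pt_lim (gfun al be) u (dgfun al be u).
Proof.
  intros Ha Hu. unfold gfun, dgfun.
  replace ((al + 1) * pw u al * pw (1 - u) be) with (((al + 1) * pw u (al + 1 - 1)) * pw (1 - u) be)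
    by (replace (al + 1 - 1) with al by ring; ring).
  apply (derivable_pt_lim_mult (fun u => pw u (al + 1)) (fun u => pw (1 - u) be)).
  apply pw_deriv; lra.
  apply (derivable_pt_lim_comp (fun u => 1 - u) (fun v => pw v be)).
  apply (derivable_pt_lim_minus (fun _ => 1) (fun u => u)). apply derivable_pt_lim_const. apply derivable_pt_lim_id.
  apply pw_deriv_pos. lra.
Qed.

Lemma gfun_cont al be u : al > 0 -> be > 0 -> 0 <= u <= 1 -> continuity_pt (gfun al be) u.
Proof. intros Ha Hb Hu. unfold gfun. apply continuity_pt_mult with (f1 := fun u => pw u (al + 1)) (f2 := fun u => pw (1 - u) be).
  apply pw_cont; lra. apply pw1m_cont; lra. Qed.

Lemma dgfun_cont al be u : al > 0 -> be > 0 -> 0 <= u < 1 -> continuity_pt (dgfun al be) u.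
Proof. intros Ha Hb Hu. unfold dgfun.
  apply continuity_pt_plus with (f1 := fun u => (al + 1) * pw u al * pw (1 - u) be)
    (f2 := fun u => pw u (al + 1) * (be * pw (1 - u) (be - 1) * (0 - 1))).
  - apply continuity_pt_mult with (f1 := fun u => (al + 1) * pw u al) (f2 := fun u => pw (1 - u) be).
    apply continuity_pt_scal with (f := fun u => pw u al). apply pw_cont; lra. apply pw1m_cont; lra.
  - apply continuity_pt_mult with (f1 := fun u => pw u (al + 1)) (f2 := fun u => be * pw (1 - u) (be - 1) * (0 - 1)).
    apply pw_cont; lra.
    apply continuity_pt_mult with (f1 := fun u => be * pw (1 - u) (be - 1)) (f2 := fun _ => 0 - 1).
    apply continuity_pt_scal with (f := fun u => pw (1 - u) (be - 1)).
    apply (continuity_pt_comp (fun u => 1 - u) (fun v => pw v (be - 1))).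
    apply (lim_cont _ _ (0 - 1)). apply (derivable_pt_lim_minus (fun _ => 1) (fun u => u) u 0 1 ltac:(apply derivable_pt_lim_const) ltac:(apply derivable_pt_lim_id)).
    apply pw_cont_pos; lra. apply continuity_pt_const. intros x y; auto.
Qed.

Lemma gfun_eq al be u : gfun al be u = u * rho al be u.
Proof. unfold gfun, rho. rewrite pw_plus1'. ring. Qed.

Lemma key_identity al be A B s G dG u : u < 1 ->
  be * (G / (1 - u) * wt al be A B s u) =
  (be + al + 1) * (G * wt al be A B s u) + (u * dG) * wt al be A B s u
  - (dG * gfun al be u + G * dgfun al be u) * (A + B * theta (u - s)).
Proof.
  intros Hu. rewrite wt_rho. unfold rho, gfun, dgfun. rewrite !pw_plus1'.
  replace (pw (1 - u) be) with ((1 - u) * pw (1 - u) (be - 1)).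
  - field. lra.
  - rewrite <- (pw_plus1' (1 - u) (be - 1)). f_equal. ring.
Qed.

Lemma small_zero x : (forall e, e > 0 -> Rabs x < e) -> x = 0.
Proof. intros H. destruct (Req_dec x 0); auto. exfalso. assert (Hp : Rabs x > 0) by (apply Rabs_pos_lt; auto).
  specialize (H (Rabs x) Hp). apply (Rlt_irrefl _ H). Qed.

Lemma theta01 x : 0 <= theta x <= 1.
Proof. unfold theta. destruct (Rlt_dec x 0); lra. Qed.

Lemma wt_bound al be A B s u : al >= 0 -> be >= 0 -> 0 <= u <= 1 -> Rabs (wt al be A B s u) <= Rabs A + Rabs B.
Proof. intros Ha Hb Hu. rewrite wt_rho. pose proof (rho_bound al be u Ha Hb Hu).
  rewrite Rabs_mult, (Rabs_pos_eq (rho al be u)) by lra.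
  assert (Rabs (A + B * theta (u - s)) <= Rabs A + Rabs B).
  { eapply Rle_trans. apply Rabs_triang. rewrite Rabs_mult. pose proof (theta01 (u - s)).
    rewrite (Rabs_pos_eq (theta (u - s))) by lra. pose proof (Rabs_pos B). nra. }
  pose proof (Rabs_pos (A + B * theta (u - s))). nra. Qed.

Lemma tail_bound phi V U c K : 0 <= c <= 1 -> RInt_val phi 0 1 V -> RInt_val phi 0 c U ->
  (forall u, c < u < 1 -> Rabs (phi u) <= K) -> Rabs (U - V) <= K * (1 - c).
Proof. intros Hc HV HU HK. destruct (intg_sub phi 0 1 c 1 (RInt_val_intg _ _ _ _ HV) ltac:(lra) ltac:(lra) ltac:(lra)) as [T HT].
  assert (E := RInt_val_unique _ _ _ _ _ HV (RInt_val_chasles _ _ _ _ _ _ HU HT)).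
  replace (U - V) with (- T) by lra. rewrite Rabs_Ropp. apply (RInt_val_bound phi c 1); auto; lra. Qed.

Lemma prod_bnd f g : (exists M, forall u, 0 <= u <= 1 -> Rabs (f u) <= M) -> (exists M, forall u, 0 <= u <= 1 -> Rabs (g u) <= M) ->
  exists M, forall u, 0 <= u <= 1 -> Rabs (f u * g u) <= M.
Proof. intros [M1 H1] [M2 H2]. exists (M1 * M2). intros u Hu. rewrite Rabs_mult.
  specialize (H1 u Hu); specialize (H2 u Hu). pose proof (Rabs_pos (f u)); pose proof (Rabs_pos (g u)).
  apply Rmult_le_compat; auto. Qed.
Lemma sum_bnd f g : (exists M, forall u, 0 <= u <= 1 -> Rabs (f u) <= M) -> (exists M, forall u, 0 <= u <= 1 -> Rabs (g u) <= M) ->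
  exists M, forall u, 0 <= u <= 1 -> Rabs (f u + g u) <= M.
Proof. intros [M1 H1] [M2 H2]. exists (M1 + M2). intros u Hu. eapply Rle_trans. apply Rabs_triang.
  specialize (H1 u Hu); specialize (H2 u Hu). lra. Qed.

Lemma cont_pow k x : continuity_pt (fun y => y ^ k) x.
Proof. apply (lim_cont _ _ (INR k * x ^ pred k)). apply derivable_pt_lim_pow. Qed.
Lemma cont_sumR (F : nat -> R -> R) N x : (forall k, continuity_pt (F k) x) ->
  continuity_pt (fun y => sumR (fun k => F k y) N) x.
Proof. intros H. induction N; simpl. apply continuity_pt_const. intros a b; auto.
  apply continuity_pt_plus with (f1 := fun y => sumR (fun k => F k y) N) (f2 := F N); auto. Qed.
Lemma dmono_cont n c x : continuity_pt (dmono n c) x.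
Proof. unfold dmono. apply continuity_pt_plus with (f1 := fun x => INR n * x ^ pred n) (f2 := dspoly c n).
  apply continuity_pt_scal with (f := fun x => x ^ pred n). apply cont_pow.
  unfold dspoly. apply cont_sumR. intros k. apply continuity_pt_scal with (f := fun x => INR k * x ^ pred k).
  apply continuity_pt_scal with (f := fun x => x ^ pred k). apply cont_pow. Qed.

Lemma y_ident al be A B P h : Hyp al be A B P h -> forall s, 0 < s < 1 -> forall m cs cm I,
  (forall x, P (S m) s x = mono (S m) cs x) -> (forall x, P m s x = mono m cm x) ->
  improper_int01 (fun u => P (S m) s u * P m s u / (1 - u) * wt al be A B s u) I ->
  be * I = - cs m * h m s + B * (P (S m) s s * P m s s * gfun al be s).
Proof.
  intros HY s Hs m cs cm I Hn Hm [Himp1 Himp2].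
  pose proof HY as (Ha&Hb&HA&HAB&_).
  set (G := fun u => P (S m) s u * P m s u).
  set (dG := fun u => dmono (S m) cs u * P m s u + P (S m) s u * dmono m cm u).
  set (Gg := fun u => G u * gfun al be u).
  set (dGg := fun u => dG u * gfun al be u + G u * dgfun al be u).
  set (W := fun u => A + B * theta (u - s)).
  set (f := fun u => P (S m) s u * P m s u / (1 - u) * wt al be A B s u).
  assert (HGd : forall u, derivable_pt_lim G u (dG u)).
  { intros u. apply dpl_ext with (fun u => mono (S m) cs u * mono m cm u).
    intros y; unfold G; rewrite Hn, Hm; auto.
    unfold dG. rewrite Hn, Hm. apply (derivable_pt_lim_mult (mono (S m) cs) (mono m cm)); apply mono_deriv. }
  assert (Hderiv : forall u, u < 1 -> derivable_pt_lim Gg u (dGg u)).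
  { intros u Hu. apply (derivable_pt_lim_mult G (gfun al be)); auto. apply gfun_deriv; auto. }
  assert (HGc : forall u, continuity_pt G u) by (intros u; apply (lim_cont _ _ (dG u)); auto).
  assert (HdGc : forall u, continuity_pt dG u).
  { intros u. unfold dG. apply continuity_pt_plus; apply continuity_pt_mult;
    try (apply (poly_cont _ _ _ _ _ _ HY); auto).
    all: apply dmono_cont. }
  assert (HdGgc : forall u, 0 <= u < 1 -> continuity_pt dGg u).
  { intros u Hu. unfold dGg. apply continuity_pt_plus; apply continuity_pt_mult; auto.
    apply gfun_cont; lra. apply dgfun_cont; lra. }
  assert (J1 : RInt_val (fun u => G u * wt al be A B s u) 0 1 0).
  { assert (E := hyp_ip _ _ _ _ _ _ HY s Hs (S m) m). unfold Gm in E. destruct (Nat.eqb_spec (S m) m); [lia|]. auto. }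
  assert (J2 : RInt_val (fun u => (u * dG u) * wt al be A B s u) 0 1 (- cs m * h m s)).
  { apply RInt_val_ext with (fun u => (u * dmono (S m) cs u) * P m s u * wt al be A B s u +
       P (S m) s u * (u * dmono m cm u) * wt al be A B s u).
    intros u; unfold dG; ring. replace (- cs m * h m s) with (- cs m * h m s + 0) by ring.
    apply RInt_val_plus. apply (ip_xd1 _ _ _ _ _ _ HY s Hs m cs cm Hn Hm). apply (ip_xd2 _ _ _ _ _ _ HY s Hs m cm Hm). }
  assert (BPn : exists M, forall u, 0 <= u <= 1 -> Rabs (P (S m) s u) <= M).
  { apply (poly_bnd (S (S m))). apply monic_deg, (hyp_mon _ _ _ _ _ _ HY); auto. }
  assert (BPm : exists M, forall u, 0 <= u <= 1 -> Rabs (P m s u) <= M).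
  { apply (poly_bnd (S m)). apply monic_deg, (hyp_mon _ _ _ _ _ _ HY); auto. }
  destruct (prod_bnd _ _ BPn BPm) as [MG HMG].
  assert (BdG : exists M, forall u, 0 <= u <= 1 -> Rabs ((u * dmono (S m) cs u) * P m s u + P (S m) s u * (u * dmono m cm u)) <= M).
  { apply sum_bnd; apply prod_bnd; auto; eapply poly_bnd; apply xdmono_deg. }
  destruct BdG as [M2 HM2].
  set (Kw := Rabs A + Rabs B).
  assert (HKw : forall u, 0 <= u <= 1 -> Rabs (wt al be A B s u) <= Kw) by (intros; apply wt_bound; lra).
  assert (Kw0 : 0 <= Kw) by (unfold Kw; pose proof (Rabs_pos A); pose proof (Rabs_pos B); lra).
  assert (MG0 : 0 <= MG) by (pose proof (HMG 0 ltac:(lra)); pose proof (Rabs_pos (P (S m) s 0 * P m s 0)); lra).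
  assert (M20 : 0 <= M2).
  { pose proof (HM2 0 ltac:(lra)). pose proof (Rabs_pos ((0 * dmono (S m) cs 0) * P m s 0 + P (S m) s 0 * (0 * dmono m cm 0))). lra. }
  assert (Gg0 : Gg 0 = 0) by (unfold Gg; rewrite gfun_eq; ring).
  assert (Hc_formula : forall c v, s < c < 1 -> RInt_val f 0 c v -> exists I1c I2c,
     Rabs I1c <= MG * Kw * (1 - c) /\ Rabs (I2c + cs m * h m s) <= M2 * Kw * (1 - c) /\ be * v = (be + al + 1) * I1c + I2c - (A * Gg s + (A + B) * (Gg c - Gg s))).
  { intros c v Hc Hv.
    destruct (intg_sub _ 0 1 0 c (RInt_val_intg _ _ _ _ J1) ltac:(lra) ltac:(lra) ltac:(lra)) as [I1c H1].
    destruct (intg_sub _ 0 1 0 c (RInt_val_intg _ _ _ _ J2) ltac:(lra) ltac:(lra) ltac:(lra)) as [I2c H2].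
    exists I1c, I2c. split; [|split].
    - replace I1c with (I1c - 0) by ring. apply (tail_bound (fun u => G u * wt al be A B s u)); auto; try lra.
      intros u Hu. rewrite Rabs_mult. apply Rmult_le_compat; try apply Rabs_pos. apply HMG; lra. apply HKw; lra.
    - replace (I2c + cs m * h m s) with (I2c - (- cs m * h m s)) by ring.
      apply (tail_bound (fun u => (u * dG u) * wt al be A B s u)); auto; try lra.
      intros u Hu. rewrite Rabs_mult. apply Rmult_le_compat; try apply Rabs_pos.
      unfold dG. replace (u * (dmono (S m) cs u * P m s u + P (S m) s u * dmono m cm u)) with
        ((u * dmono (S m) cs u) * P m s u + P (S m) s u * (u * dmono m cm u)) by ring. apply HM2; lra. apply HKw; lra.
    - assert (H3 : RInt_val (fun u => dGg u * W u) 0 c ((be + al + 1) * I1c + 1 * I2c + (- be) * v)).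
      { apply RInt_val_ext_closed with (fun u => ((G u * wt al be A B s u) * (be + al + 1) + 1 * ((u * dG u) * wt al be A B s u)) + (- be) * f u).
        - intros u Hu. rewrite Rmin_left, Rmax_right in Hu by lra. unfold f, W, dGg.
          pose proof (key_identity al be A B s (G u) (dG u) u ltac:(lra)) as K. unfold G in K |- *. lra.
        - apply RInt_val_lin; auto.
          apply RInt_val_lin; auto. apply RInt_val_ext with (fun x => (be + al + 1) * (G x * wt al be A B s x)).
          intros; ring. apply RInt_val_scal; auto. }
      pose proof (RInt_val_intg _ _ _ _ H3) as p3.
      destruct (intg_sub _ 0 c 0 s p3 ltac:(lra) ltac:(lra) ltac:(lra)) as [u1 Hu1].
      destruct (intg_sub _ 0 c s c p3 ltac:(lra) ltac:(lra) ltac:(lra)) as [u2 Hu2].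
      assert (E := RInt_val_unique _ _ _ _ _ H3 (RInt_val_chasles _ _ _ _ _ _ Hu1 Hu2)).
      assert (F1 : RInt_val dGg 0 s (Gg s - Gg 0)).
      { apply FTC_val. lra. intros x Hx; apply HdGgc; lra. intros x Hx; apply Hderiv; lra. }
      assert (F2 : RInt_val dGg s c (Gg c - Gg s)).
      { apply FTC_val. lra. intros x Hx; apply HdGgc; lra. intros x Hx; apply Hderiv; lra. }
      assert (E1 : u1 = A * (Gg s - Gg 0)).
      { eapply RInt_val_unique. apply Hu1. apply (RInt_val_open (fun u => A * dGg u)); [lra| |apply RInt_val_scal; auto|eauto].
        intros x Hx. unfold W. rewrite theta_neg by lra. ring. }
      assert (E2 : u2 = (A + B) * (Gg c - Gg s)).
      { eapply RInt_val_unique. apply Hu2. apply (RInt_val_open (fun u => (A + B) * dGg u)); [lra| |apply RInt_val_scal; auto|eauto].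
        intros x Hx. unfold W. rewrite theta_pos by lra. ring. }
      rewrite Gg0 in E1. lra. }
  assert (Gs : Gg s = P (S m) s s * P m s s * gfun al be s) by reflexivity.
  rewrite <- Gs.
  apply Rminus_diag_uniq. apply small_zero. intros e He.
  set (K := (be + al + 1) * (MG * Kw) + M2 * Kw + 1).
  assert (K0 : K > 0) by (unfold K; assert (0 <= MG * Kw) by nra; assert (0 <= M2 * Kw) by nra; nra).
  set (L := Rabs (A + B) * MG).
  assert (L0 : 0 <= L) by (unfold L; pose proof (Rabs_pos (A + B)); nra).
  destruct (Himp2 (e / (2 * be)) ltac:(apply Rlt_gt, Rdiv_lt_0_compat; lra)) as [di [Hdi Hdi']].
  destruct (pw_small be Hb (e / (4 * (L + 1))) ltac:(apply Rlt_gt, Rdiv_lt_0_compat; lra)) as [d2 [Hd2 Hd2']].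
  set (eta := Rmin (Rmin di d2) (Rmin (1 - s) (e / (8 * K)))).
  assert (Heta : 0 < eta) by (unfold eta; repeat apply Rmin_pos; try lra; apply Rdiv_lt_0_compat; lra).
  assert (Heta1 : eta <= di) by (unfold eta; eapply Rle_trans; apply Rmin_l).
  assert (Heta2 : eta <= d2) by (unfold eta; eapply Rle_trans; [apply Rmin_l|apply Rmin_r]).
  assert (Heta3 : eta <= 1 - s) by (unfold eta; eapply Rle_trans; [apply Rmin_r|apply Rmin_l]).
  assert (Heta4 : eta <= e / (8 * K)) by (unfold eta; eapply Rle_trans; apply Rmin_r).
  set (c := 1 - eta / 2).
  assert (Hc : s < c < 1) by (unfold c; lra).
  destruct (Himp1 c ltac:(lra)) as [v Hv].
  assert (Hvi : Rabs (v - I) < e / (2 * be)) by (apply (Hdi' c v); auto; unfold c; lra).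
  destruct (Hc_formula c v Hc Hv) as [I1c [I2c [B1 [B2 E]]]].
  assert (HGgc : Rabs (Gg c) <= MG * pw (1 - c) be).
  { unfold Gg, G, gfun.
    assert (pw c (al + 1) <= 1) by (apply pw_le1; lra). pose proof (pw_nonneg c (al + 1)). pose proof (pw_nonneg (1 - c) be).
    assert (Rabs (P (S m) s c * P m s c) <= MG) by (apply HMG; lra).
    pose proof (Rabs_pos (P (S m) s c * P m s c)).
    rewrite Rabs_mult. rewrite (Rabs_pos_eq (pw c (al + 1) * pw (1 - c) be)) by nra.
    apply Rle_trans with (MG * (pw c (al + 1) * pw (1 - c) be)). apply Rmult_le_compat_r; nra.
    apply Rmult_le_compat_l; nra. }
  assert (Hpw : pw (1 - c) be < e / (4 * (L + 1))) by (apply Hd2'; unfold c; lra).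
  assert (T3 : Rabs ((A + B) * Gg c) <= e / 4).
  { rewrite Rabs_mult. pose proof (Rabs_pos (A + B)). pose proof (pw_nonneg (1 - c) be).
    apply Rle_trans with (L * (e / (4 * (L + 1)))).
    - unfold L at 1. rewrite Rmult_assoc. apply Rmult_le_compat_l; auto. eapply Rle_trans; [apply HGgc|]. apply Rmult_le_compat_l; lra.
    - apply Rmult_le_reg_r with (4 * (L + 1)). lra. field_simplify; nra. }
  assert (T12 : Rabs ((be + al + 1) * I1c + (I2c + cs m * h m s)) <= e / 8).
  { eapply Rle_trans. apply Rabs_triang. rewrite Rabs_mult, (Rabs_pos_eq (be + al + 1)) by lra.
    apply Rle_trans with (K * (1 - c)).
    - unfold K. nra.
    - unfold c. apply Rle_trans with (K * (e / (8 * K))). nra. apply Req_le. field. lra. }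
  assert (T0 : Rabs (be * (I - v)) < e / 2).
  { rewrite Rabs_mult, Rabs_pos_eq by lra. rewrite <- Rabs_Ropp, Ropp_minus_distr.
    apply Rmult_lt_reg_r with (/ be). apply Rinv_0_lt_compat; lra.
    replace (be * Rabs (v - I) * / be) with (Rabs (v - I)) by (field; lra).
    replace (e / 2 * / be) with (e / (2 * be)) by (field; lra). auto. }
  replace (be * I - (- cs m * h m s + B * Gg s)) with
    (be * (I - v) + (((be + al + 1) * I1c + (I2c + cs m * h m s)) - (A + B) * Gg c)) by lra.
  eapply Rle_lt_trans. apply Rabs_triang. unfold Rminus at 2.
  pose proof (Rabs_triang ((be + al + 1) * I1c + (I2c + cs m * h m s)) (- ((A + B) * Gg c))).
  rewrite Rabs_Ropp in H. lra.
Qed.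


Theorem lemma3p2 (alpha beta A B : R)
  (P : nat -> R -> R -> R) (h : nat -> R -> R) (y : nat -> R -> R) :
  alpha > 0 -> beta > 0 -> A >= 0 -> A + B >= 0 -> ~ (A = 0 /\ B = 0) ->
  (forall n t, 0 < t < 1 -> monic_poly n (P n t)) ->
  (forall i j t, 0 < t < 1 -> i <> j ->
     RInt_val (fun x => P i t x * P j t x * wt alpha beta A B t x) 0 1 0) ->
  (forall i t, 0 < t < 1 ->
     RInt_val (fun x => P i t x * P i t x * wt alpha beta A B t x) 0 1 (h i t)) ->
  (forall t, 0 < t < 1 -> y 0%nat t = 0) ->
  (forall m t, 0 < t < 1 -> exists I,
     improper_int01
       (fun u => P (S m) t u * P m t u / (1 - u) * wt alpha beta A B t u) I /\
     y (S m) t = beta / h m t * I) ->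
  forall (n : nat) (t : R), 0 < t < 1 ->
  exists d : R,
    derivable_pt_lim (r_fun alpha beta B P h n) t d /\
    derivable_pt_lim (y n) t (t * d).
Proof.
  intros Ha Hb HA HAB HnAB Hmon Horth Hh Hy0 HyS n t Ht.
  assert (HY : Hyp alpha beta A B P h).
  { repeat split; auto. intros i j s Hs. unfold Gm. destruct (Nat.eqb_spec i j).
    - subst. auto.
    - auto. }
  destruct (near_open t Ht) as [dn [Hdn Hnear]].
  destruct n as [|m].
  - exists 0. split.
    + apply dpl_ext with (fun _ => 0). intros; reflexivity. apply derivable_pt_lim_const.
    + rewrite Rmult_0_r. apply derivable_pt_lim_loc with (g := fun _ => 0).
      { exists dn. split; auto. }
      apply derivable_pt_lim_const.
  - destruct (Dble_r _ _ _ _ _ _ HY t Ht (S m)) as [d Hd].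
    exists d. split; auto.
    destruct (mono_of _ _ _ _ _ _ HY t Ht (S m)) as [ct Hct].
    set (r := r_fun alpha beta B P h (S m)).
    apply derivable_pt_lim_loc with (g := fun s => s * r s - ct m - acoef alpha beta B P h (S m) t s m).
    + exists dn. split; auto. intros s Hsd. pose proof (Hnear s Hsd) as Hs.
      destruct (HyS m s Hs) as [I [HI HyI]].
      destruct (mono_of _ _ _ _ _ _ HY s Hs (S m)) as [cs Hcs].
      destruct (mono_of _ _ _ _ _ _ HY s Hs m) as [cm Hcm].
      pose proof (y_ident _ _ _ _ _ _ HY s Hs m cs cm I Hcs Hcm HI) as E.
      pose proof (coef_shift _ _ _ _ _ _ HY s t Hs Ht m cs ct Hcs Hct) as E2.
      pose proof (h_nz _ _ _ _ _ _ HY s Hs m) as Hnz.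
      rewrite HyI. unfold r, r_fun. rewrite gfun_eq in E. unfold rho in E.
      replace (beta / h m s * I) with ((beta * I) / h m s) by (field; auto). rewrite E. rewrite E2.
      field. auto.
    + assert (Da := deriv_a _ _ _ _ _ _ HY t Ht (S m) m).
      replace (t * d) with ((1 * r t + t * d - 0) - B * (P (S m) t t * P m t t * rho alpha beta t) / h m t).
      * apply (derivable_pt_lim_minus (fun s => s * r s - ct m)); auto.
        apply (derivable_pt_lim_minus (fun s => s * r s) (fun _ => ct m)). 2: apply derivable_pt_lim_const.
        apply (derivable_pt_lim_mult (fun s => s) r). apply derivable_pt_lim_id. auto.
      * unfold r, r_fun, rho. field. apply (h_nz _ _ _ _ _ _ HY); auto.
Qed.
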